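(* Let $\lambda \geq 0$, $0 \leq \gamma \leq 1$, $0\leq \beta<1$, $\tau \in \mathbb{C}\setminus\{0\}$, $\delta \in \mathbb{N}_0=\{0,1,2,\dots\}$ and $m \in \mathbb{N}$. Let $f(z)=z+\sum_{k=1}^{\infty} a_{mk+1}z^{mk+1}$ belong to the class $\Theta_{\Sigma_m}(\tau,\lambda,\gamma,\delta;\beta)$. Then $$|a_{m+1}| \leq \min\left\{\frac{2|\tau|(1-\beta)}{(\delta+1)\left(1+m(\lambda+\gamma)+\lambda\gamma\left((m+1)^2+1\right)\right)},\ 2\sqrt{\frac{2|\tau|(1-\beta)}{(\delta+1)(\delta+2)(m+1)\Phi_1(\lambda,\gamma,m)}}\right\}$$ and $$|a_{2m+1}| \leq \frac{4|\tau|(1-\beta)}{(\delta+1)(\delta+2)\left(1+2(\lambda+\gamma)m+\lambda\gamma\left((2m+1)^2+1\right)\right)},$$ where $\Phi_1(\lambda,\gamma,m)=1+2(\lambda+\gamma)m+\lambda\gamma\left((2m+1)^2+1\right)$.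
   Context: Let $\mathbb{U}=\{z\in\mathbb{C}:|z|<1\}$ and $m\in\mathbb{N}$. $\mathcal{A}_m$ denotes the class of functions analytic in $\mathbb{U}$ of the form $f(z)=z+\sum_{k=1}^{\infty}a_{mk+1}z^{mk+1}$. $\Sigma_m$ denotes the class of $m$-fold symmetric bi-univalent functions: functions $f\in\mathcal{A}_m$ univalent in $\mathbb{U}$ whose inverse $f^{-1}$ extends to a univalent function $g$ on $\mathbb{U}$; this $g$ has the expansion $g(w)=w-a_{m+1}w^{m+1}+\left[(m+1)a_{m+1}^2-a_{2m+1}\right]w^{2m+1}-\cdots$. For $\delta\in\mathbb{N}_0$ and $h(z)=z+\sum_{k\ge1}c_{mk+1}z^{mk+1}$ analytic in $\mathbb{U}$, the $m$-fold Ruscheweyh derivative is $\mathcal{R}^\delta h(z)=z+\sum_{k=1}^{\infty}\frac{\Gamma(\delta+k+1)}{\Gamma(k+1)\Gamma(\delta+1)}c_{mk+1}z^{mk+1}$. For such $h$ and parameters $\lambda,\gamma,\tau\neq0,\delta$, put $$J_h(z)=1+\frac{1}{\tau}\Big[(1-\lambda)(1-\gamma)\frac{\mathcal{R}^\delta h(z)}{z}+(\lambda(\gamma+1)+\gamma)(\mathcal{R}^\delta h)'(z)+\lambda\gamma\big(z(\mathcal{R}^\delta h)''(z)-2\big)-1\Big].$$ For $0\le\beta<1$, $\Theta_{\Sigma_m}(\tau,\lambda,\gamma,\delta;\beta)$ is the set of $f\in\Sigma_m$ such that $\operatorname{Re}J_f(z)>\beta$ for all $z\in\mathbb{U}$ and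 $\operatorname{Re}J_g(w)>\beta$ for all $w\in\mathbb{U}$, where $g$ is the extension of $f^{-1}$ to $\mathbb{U}$. *)

(* Defs.v *)
From Stdlib Require Import Reals Arith ClassicalEpsilon.
From Coquelicot Require Import Coquelicot.

Open Scope R_scope.

Definition in_U (z : C) : Prop := Cmod z < 1.

Definition csum (a : nat -> C) (z : C) : C :=
  epsilon (inhabits (RtoC 0)) (fun l : C => is_pseries a z l).

Definition cderiv (F : C -> C) (z : C) : C :=
  epsilon (inhabits (RtoC 0))
    (fun l : C => @is_derive C_AbsRing C_NormedModule F z l).

Definition analytic_U (h : C -> C) : Prop :=
  exists c : nat -> C, forall z, in_U z -> is_pseries c z (h z).

Definition coeffs_of (h : C -> C) : nat -> C :=
  epsilon (inhabits (fun _ => RtoC 0))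
    (fun c : nat -> C => forall z, in_U z -> is_pseries c z (h z)).

(* coefficient shape of A_m : z + sum_{k>=1} a_{mk+1} z^{mk+1} *)
Definition mfold_coeffs (m : nat) (a : nat -> C) : Prop :=
  a 1%nat = RtoC 1 /\ forall n : nat, (forall k : nat, n <> (m * k + 1)%nat) -> a n = RtoC 0.

Definition in_Am (m : nat) (f : C -> C) : Prop :=
  exists a : nat -> C, mfold_coeffs m a /\ forall z, in_U z -> is_pseries a z (f z).

Definition univalent_U (f : C -> C) : Prop :=
  forall z1 z2, in_U z1 -> in_U z2 -> f z1 = f z2 -> z1 = z2.

(* g is a univalent analytic function on U extending f^{-1} : f(U) -> U *)
Definition inverse_extension (f g : C -> C) : Prop :=
  analytic_U g /\ univalent_U g /\
  forall z, in_U z -> in_U (f z) -> g (f z) = z.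

Definition in_Sigma_m (m : nat) (f g : C -> C) : Prop :=
  in_Am m f /\ univalent_U f /\ inverse_extension f g.

(* coefficients of the m-fold Ruscheweyh derivative R^delta h:
   z + sum_{k>=1} Gamma(delta+k+1)/(Gamma(k+1) Gamma(delta+1)) c_{mk+1} z^{mk+1} *)
Definition rus_coef (m delta : nat) (c : nat -> C) (n : nat) : C :=
  match n with
  | O => RtoC 0
  | S j =>
      if Nat.eqb j 0 then RtoC 1
      else if Nat.eqb (Nat.modulo j m) 0 then
        Cmult (RtoC (INR (fact (delta + Nat.div j m)) /
                     (INR (fact (Nat.div j m)) * INR (fact delta))))
              (c n)
      else RtoC 0
  end.

Definition Rus (m delta : nat) (h : C -> C) : C -> C :=
  fun z => csum (rus_coef m delta (coeffs_of h)) z.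

(* R^delta h (z) / z, with its removable singularity at 0 filled (value 1) *)
Definition Rus_div_z (m delta : nat) (h : C -> C) (z : C) : C :=
  match excluded_middle_informative (z = RtoC 0) with
  | left _ => RtoC 1
  | right _ => Cdiv (Rus m delta h z) z
  end.

Definition J (m delta : nat) (tau : C) (lam gam : R) (h : C -> C) (z : C) : C :=
  let F := Rus m delta h in
  Cplus (RtoC 1)
    (Cmult (Cinv tau)
      (Cminus
        (Cplus
          (Cplus (Cmult (RtoC ((1 - lam) * (1 - gam))) (Rus_div_z m delta h z))
                 (Cmult (RtoC (lam * (gam + 1) + gam)) (cderiv F z)))
          (Cmult (RtoC (lam * gam))
                 (Cminus (Cmult z (cderiv (cderiv F) z)) (RtoC 2))))
        (RtoC 1))).

Definition in_Theta (m : nat) (tau : C) (lam gam : R) (delta : nat) (beta : R)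
    (f : C -> C) : Prop :=
  exists g : C -> C, in_Sigma_m m f g /\
    (forall z, in_U z -> Re (J m delta tau lam gam f z) > beta) /\
    (forall w, in_U w -> Re (J m delta tau lam gam g w) > beta).

Definition Phi1 (lam gam : R) (m : nat) : R :=
  1 + 2 * (lam + gam) * INR m + lam * gam * ((2 * INR m + 1) ^ 2 + 1).

(* Main.v *)
Require Import Defs.
From Stdlib Require Import Reals Arith Lra Lia ClassicalEpsilon FunctionalExtensionality.
From Coquelicot Require Import Coquelicot.
Open Scope R_scope.

Fixpoint fsum (u : nat -> C) (N : nat) : C :=
  match N with O => RtoC 0 | S k => Cplus (fsum u k) (u k) end.

Lemma sum_n_fsum (u : nat -> C) n : sum_n u n = fsum u (S n).
Proof.
  induction n. rewrite sum_O. simpl. change (u 0%nat = (0 + u 0%nat)%C). ring.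
  rewrite sum_Sn, IHn. reflexivity.
Qed.

Lemma series_norm_le (u : nat -> C) (v : nat -> R) l s :
  is_series u l -> is_series v s -> (forall n, Cmod (u n) <= v n) -> Cmod l <= s.
Proof.
  intros Hu Hv Hle.
  assert (H1 : forall n, Cmod (sum_n u n) <= sum_n v n).
  { induction n. rewrite !sum_O. apply Hle.
    rewrite !sum_Sn. eapply Rle_trans. apply Cmod_triangle.
    change (plus (sum_n v n) (v (S n))) with (sum_n v n + v (S n)). specialize (Hle (S n)). 
    change (Cmod (sum_n u n) + Cmod (u (S n)) <= sum_n v n + v (S n)). lra. }
  assert (L1 : is_lim_seq (fun n => Cmod (sum_n u n)) (Cmod l)).
  { assert (H : filterlim (fun n => @norm C_AbsRing C_NormedModule (sum_n u n)) eventually (locally (norm l))).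
    { eapply filterlim_comp. exact Hu. apply filterlim_norm. }
    unfold is_lim_seq, Rbar_locally. exact H. }
  assert (L2 : is_lim_seq (fun n => sum_n v n) s) by exact Hv.
  pose proof (is_lim_seq_le _ _ _ _ H1 L1 L2). simpl in H. exact H.
Qed.

Lemma fsum_stable (u : nat -> C) N n : (forall k, (N <= k)%nat -> u k = RtoC 0) ->
  (N <= n)%nat -> fsum u n = fsum u N.
Proof.
  intros H Hn. induction Hn. reflexivity.
  simpl. rewrite IHHn, H by lia. ring.
Qed.

Lemma is_series_fin (u : nat -> C) N :
  (forall k, (N <= k)%nat -> u k = RtoC 0) -> is_series u (fsum u N).
Proof.
  intros H. apply (filterlim_locally (F := eventually)). intros eps.
  exists N. intros n Hn. rewrite sum_n_fsum. rewrite (fsum_stable u N (S n) H) by lia.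
  apply ball_center.
Qed.

Lemma is_series_C_unique (u : nat -> C) l1 l2 :
  is_series u l1 -> is_series u l2 -> l1 = l2.
Proof.
  intros H1 H2. eapply (filterlim_locally_unique (F := eventually)); eauto.
Qed.

Lemma is_series_R_unique (u : nat -> R) l1 l2 :
  is_series u l1 -> is_series u l2 -> l1 = l2.
Proof.
  intros H1 H2. eapply (filterlim_locally_unique (F := eventually)); eauto.
Qed.

Definition term (c : nat -> C) (z : C) (n : nat) : C := Cmult (Cpow z n) (c n).

Lemma pow_n_Cpow (z : C) n : @pow_n C_Ring z n = Cpow z n.
Proof. induction n; simpl; [reflexivity| rewrite IHn; reflexivity]. Qed.

Lemma pseries_term c z l : is_pseries c z l <-> is_series (term c z) l.
Proof.
  unfold is_pseries, term. split; apply is_series_ext; intros n;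
  rewrite <- pow_n_Cpow; reflexivity.
Qed.

Lemma csum_eq c z l : is_pseries c z l -> csum c z = l.
Proof.
  intros H. unfold csum.
  pose proof (epsilon_spec (inhabits (RtoC 0)) (fun l => is_pseries c z l) (ex_intro _ l H)) as H2.
  cbv beta in H2. apply pseries_term in H2. apply pseries_term in H. eapply is_series_C_unique; eauto.
Qed.

Definition Good (c : nat -> C) := forall r, 0 <= r < 1 -> exists M, forall n, Cmod (c n) * r ^ n <= M.

Lemma good_at c t : Good c -> 0 <= t < 1 ->
  exists M r, t < r /\ r < 1 /\ 0 <= M /\ forall n, Cmod (c n) * r ^ n <= M.
Proof.
  intros G Ht. destruct (G ((1+t)/2)) as [M HM]. lra.
  exists M, ((1+t)/2). repeat split; try lra.
  specialize (HM 0%nat). simpl in HM. pose proof (Cmod_ge_0 (c 0%nat)). lra.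
  exact HM.
Qed.

Lemma trunc_geom q K : 0 <= q < 1 ->
  is_series (fun l => if (l <? K)%nat then 0 else q ^ l) (q ^ K / (1 - q)).
Proof.
  intros Hq. induction K.
  - replace (q ^ 0 / (1 - q)) with (/ (1 - q)) by (simpl; field; lra).
    eapply is_series_ext. 2: apply is_series_geom; rewrite Rabs_pos_eq; lra.
    intros n. simpl. reflexivity.
  - apply is_series_decr_1.
    assert (H : is_series (fun l => q * (if (l <? K)%nat then 0 else q ^ l)) (q * (q ^ K / (1 - q))))
      by apply (is_series_scal_l q _ _ IHK).
    assert (E : plus (q ^ S K / (1 - q)) (opp (if (0 <? S K)%nat then 0 else q ^ 0)) = q * (q ^ K / (1 - q))).
    { simpl. unfold plus, opp; simpl. unfold Rdiv. ring. }
    match goal with |- is_series _ ?v => replace v with (q * (q ^ K / (1 - q))) end. eapply is_series_ext; [|exact H].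
    intros n. replace (S n <? S K)%nat with (n <? K)%nat by reflexivity. destruct (n <? K)%nat; simpl; ring.
Qed.

Lemma fsum_ext (u v : nat -> C) N : (forall k, (k < N)%nat -> u k = v k) -> fsum u N = fsum v N.
Proof. induction N; intros H; simpl. reflexivity. rewrite IHN by (intros; apply H; lia). rewrite H by lia. reflexivity. Qed.

Lemma series_trunc (u : nat -> C) S N : is_series u S ->
  is_series (fun l => if (l <? N)%nat then RtoC 0 else u l) (S - fsum u N)%C.
Proof.
  intros H.
  assert (H2 : is_series (fun l => if (l <? N)%nat then u l else RtoC 0) (fsum u N)).
  { replace (fsum u N) with (fsum (fun l => if (l <? N)%nat then u l else RtoC 0) N).
    apply is_series_fin. intros k Hk. destruct (Nat.ltb_spec k N); [lia|reflexivity].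
    apply fsum_ext. intros k Hk. destruct (Nat.ltb_spec k N); [reflexivity|lia]. }
  pose proof (is_series_minus _ _ _ _ H H2) as H3.
  eapply is_series_ext; [|exact H3]. intros n. simpl.
  destruct (n <? N)%nat; unfold plus, opp; simpl; ring.
Qed.

Lemma Cmod_term c z n : Cmod (term c z n) = Cmod (c n) * Cmod z ^ n.
Proof. unfold term. rewrite Cmod_mult, Cmod_pow. ring. Qed.

Lemma good_conv c z : Good c -> Cmod z < 1 -> is_pseries c z (csum c z).
Proof.
  intros G Hz. destruct (good_at c (Cmod z) G) as (M & r & Hr1 & Hr2 & HM0 & HM).
  split; [apply Cmod_ge_0 | exact Hz].
  assert (Hr0 : 0 < r) by (pose proof (Cmod_ge_0 z); lra).
  assert (E : ex_series (term c z)).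
  { apply (ex_series_le (V := C_CompleteNormedModule)) with (b := fun n => M * (Cmod z / r) ^ n).
    - intros n. change (Cmod (term c z n) <= M * (Cmod z / r) ^ n).
      rewrite Cmod_term. unfold Rdiv. rewrite Rpow_mult_distr.
      specialize (HM n).
      assert (0 < r ^ n) by (apply pow_lt; lra).
      rewrite pow_inv.
      replace (Cmod (c n) * Cmod z ^ n) with ((Cmod (c n) * r ^ n) * (Cmod z ^ n * / r ^ n)) by (field; lra).
      apply Rmult_le_compat_r. apply Rmult_le_pos. apply pow_le, Cmod_ge_0.
      left; apply Rinv_0_lt_compat; lra. exact HM.
    - eexists. apply (is_series_scal_l (K:=R_AbsRing) (V:=R_NormedModule) M (fun n => (Cmod z / r) ^ n)). apply is_series_geom.
      rewrite Rabs_pos_eq. apply Rmult_lt_reg_r with r; [lra|]. unfold Rdiv. rewrite Rmult_assoc, Rinv_l by lra. lra.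
      apply Rmult_le_pos; [apply Cmod_ge_0|]. left; apply Rinv_0_lt_compat; lra. }
  destruct E as [l Hl]. apply pseries_term in Hl. rewrite (csum_eq _ _ _ Hl). exact Hl.
Qed.

Lemma tail_bound c N t : Good c -> 0 <= t < 1 ->
  exists K, forall z, Cmod z <= t -> Cmod (csum c z - fsum (term c z) N)%C <= K * Cmod z ^ N.
Proof.
  intros G Ht. destruct (good_at c t G Ht) as (M & r & Hr1 & Hr2 & HM0 & HM).
  assert (Hr0 : 0 < r) by lra.
  exists (M / (r ^ N * (1 - t / r))). intros z Hz.
  assert (Hz1 : Cmod z < 1) by lra.
  pose proof (good_conv c z G Hz1) as HS. apply pseries_term in HS.
  pose proof (series_trunc _ _ N HS) as HT.
  set (q := Cmod z / r).
  assert (Hq : 0 <= q <= t / r). { unfold q. split. apply Rmult_le_pos; [apply Cmod_ge_0|left; apply Rinv_0_lt_compat; lra].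
    unfold Rdiv. apply Rmult_le_compat_r; [left; apply Rinv_0_lt_compat; lra| lra]. }
  assert (Htr : t / r < 1). { apply Rmult_lt_reg_r with r; [lra|]. unfold Rdiv. rewrite Rmult_assoc, Rinv_l by lra. lra. }
  pose proof (is_series_scal_l M _ _ (trunc_geom q N ltac:(lra))) as HG.
  eapply Rle_trans. apply (series_norm_le _ _ _ _ HT HG).
  - intros n. change (Cmod (if (n <? N)%nat then RtoC 0 else term c z n) <= M * (if (n <? N)%nat then 0 else q ^ n)).
    destruct (n <? N)%nat. rewrite Cmod_0. lra.
    rewrite Cmod_term. unfold q, Rdiv. rewrite Rpow_mult_distr.
    specialize (HM n).
    assert (0 < r ^ n) by (apply pow_lt; lra).
    rewrite pow_inv.
    replace (Cmod (c n) * Cmod z ^ n) with ((Cmod (c n) * r ^ n) * (Cmod z ^ n * / r ^ n)) by (field; lra).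
    apply Rmult_le_compat_r. apply Rmult_le_pos. apply pow_le, Cmod_ge_0.
    left; apply Rinv_0_lt_compat; lra. exact HM.
  - change (M * (q ^ N / (1 - q)) <= M / (r ^ N * (1 - t / r)) * Cmod z ^ N).
    assert (0 < r ^ N) by (apply pow_lt; lra).
    assert (Eq : q ^ N = Cmod z ^ N / r ^ N) by (unfold q, Rdiv; rewrite Rpow_mult_distr, pow_inv; reflexivity).
    rewrite Eq.
    replace (M / (r ^ N * (1 - t / r)) * Cmod z ^ N) with (M * (Cmod z ^ N / r ^ N) * / (1 - t / r)) by (field; lra).
    replace (M * (Cmod z ^ N / r ^ N / (1 - q))) with (M * (Cmod z ^ N / r ^ N) * / (1 - q)) by (field; lra).
    apply Rmult_le_compat_l.
    apply Rmult_le_pos; [lra|]. apply Rmult_le_pos; [apply pow_le, Cmod_ge_0| left; apply Rinv_0_lt_compat; lra].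
    apply Rinv_le_contravar; lra.
Qed.

Lemma good_of_conv c : (forall z, Cmod z < 1 -> exists l, is_pseries c z l) -> Good c.
Proof.
  intros H r Hr.
  destruct (H (RtoC r)) as [l Hl]. rewrite Cmod_R, Rabs_pos_eq; lra.
  apply pseries_term in Hl.
  destruct (filterlim_bounded (V := C_NormedModule) (sum_n (term c r))) as [M HM].
  exists l; exact Hl.
  exists (2 * M). intros n.
  assert (E : Cmod (c n) * r ^ n = Cmod (term c r n)).
  { rewrite Cmod_term, Cmod_R, Rabs_pos_eq by lra. reflexivity. }
  rewrite E.
  pose proof (HM 0%nat) as H0. change (Cmod (sum_n (term c r) 0) <= M) in H0. clear H.
  assert (HM0 : 0 <= M) by (pose proof (Cmod_ge_0 (sum_n (term c r) 0)); lra).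
  destruct n.
  - rewrite sum_O in H0. lra.
  - pose proof (HM n) as H1. pose proof (HM (S n)) as H2.
    change (Cmod (sum_n (term c r) n) <= M) in H1.
    change (Cmod (sum_n (term c r) (S n)) <= M) in H2.
    rewrite sum_Sn in H2.
    replace (term c r (S n)) with (Cminus (plus (sum_n (term c r) n) (term c r (S n))) (sum_n (term c r) n))
      by (unfold plus; simpl; ring).
    unfold Cminus. eapply Rle_trans. apply Cmod_triangle. rewrite Cmod_opp. lra.
Qed.

Fixpoint Sabs (p : nat -> C) (N : nat) : R :=
  match N with O => 0 | S k => Sabs p k + Cmod (p k) end.

Lemma Sabs_nonneg p N : 0 <= Sabs p N.
Proof. induction N; simpl. lra. pose proof (Cmod_ge_0 (p N)). lra. Qed.

Lemma pow_le_mono_dec x a b : 0 <= x <= 1 -> (a <= b)%nat -> x ^ b <= x ^ a.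
Proof.
  intros Hx Hab. replace b with (a + (b - a))%nat by lia. rewrite pow_add.
  rewrite <- (Rmult_1_r (x ^ a)) at 2. apply Rmult_le_compat_l. apply pow_le; lra.
  rewrite <- (pow1 (b - a)). apply pow_incr; lra.
Qed.

Lemma fsum_tail_bound (p : nat -> C) z i N : Cmod z <= 1 -> (S i <= N)%nat ->
  Cmod (fsum (term p z) N - fsum (term p z) (S i))%C <= Sabs p N * Cmod z ^ (S i).
Proof.
  intros Hz HN. induction HN.
  - replace (fsum (term p z) (S i) - fsum (term p z) (S i))%C with (RtoC 0) by ring.
    rewrite Cmod_0. apply Rmult_le_pos. apply Sabs_nonneg. apply pow_le, Cmod_ge_0.
  - change (fsum (term p z) (S m)) with (fsum (term p z) m + term p z m)%C.
    change (Sabs p (S m)) with (Sabs p m + Cmod (p m)).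
    replace (fsum (term p z) m + term p z m - fsum (term p z) (S i))%C
      with ((fsum (term p z) m - fsum (term p z) (S i)) + term p z m)%C by ring.
    eapply Rle_trans. apply Cmod_triangle. rewrite Cmod_term.
    rewrite Rmult_plus_distr_r. apply Rplus_le_compat. exact IHHN.
    apply Rmult_le_compat_l. apply Cmod_ge_0. apply pow_le_mono_dec. split; [apply Cmod_ge_0|lra]. lia.
Qed.

Lemma fsum_zero_prefix (p : nat -> C) z i : (forall j, (j < i)%nat -> p j = RtoC 0) ->
  fsum (term p z) (S i) = term p z i.
Proof.
  intros H. simpl. replace (fsum (term p z) i) with (RtoC 0). ring.
  clear -H. induction i. reflexivity. simpl. rewrite <- IHi by (intros; apply H; lia).
  unfold term. rewrite H by lia. ring.
Qed.

Lemma coef_extract (p : nat -> C) N K d : 0 < d ->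
  (forall z, Cmod z <= d -> Cmod (fsum (term p z) N) <= K * Cmod z ^ N) ->
  forall i, (i < N)%nat -> p i = RtoC 0.
Proof.
  intros Hd H i. induction i as [i IH] using (well_founded_induction Wf_nat.lt_wf). intros Hi.
  assert (Hprev : forall j, (j < i)%nat -> p j = RtoC 0) by (intros; apply IH; lia).
  destruct (Req_dec (Cmod (p i)) 0) as [E|E]. apply Cmod_eq_0; exact E.
  exfalso. pose proof (Cmod_ge_0 (p i)) as Hp0.
  set (B := Rabs K + Sabs p N + 1).
  assert (HB : 1 <= B) by (unfold B; pose proof (Rabs_pos K); pose proof (Sabs_nonneg p N); lra).
  set (t := Rmin d (Rmin 1 (Cmod (p i) / (2 * B)))).
  assert (Ht0 : 0 < t). { unfold t. apply Rmin_pos. lra. apply Rmin_pos. lra. apply Rdiv_lt_0_compat; lra. }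
  assert (Ht1 : t <= 1) by (unfold t; eapply Rle_trans; [apply Rmin_r|apply Rmin_l]).
  assert (Ht2 : t <= Cmod (p i) / (2 * B)) by (unfold t; eapply Rle_trans; [apply Rmin_r|apply Rmin_r]).
  assert (Ht3 : t <= d) by (unfold t; apply Rmin_l).
  assert (Hzt : Cmod (RtoC t) = t) by (rewrite Cmod_R, Rabs_pos_eq; lra).
  specialize (H (RtoC t) ltac:(lra)).
  pose proof (fsum_tail_bound p (RtoC t) i N ltac:(lra) Hi) as HT.
  rewrite fsum_zero_prefix in HT by exact Hprev.
  rewrite Hzt in H, HT.
  assert (Hti : Cmod (term p t i) = Cmod (p i) * t ^ i) by (rewrite Cmod_term, Hzt; reflexivity).
  assert (Hineq : Cmod (p i) * t ^ i <= (Rabs K + Sabs p N) * t ^ (S i)).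
  { rewrite <- Hti.
    replace (term p t i) with (fsum (term p t) N - (fsum (term p t) N - term p t i))%C by ring.
    unfold Cminus at 1. eapply Rle_trans. apply Cmod_triangle. rewrite Cmod_opp.
    rewrite Rmult_plus_distr_r. apply Rplus_le_compat; [|exact HT].
    eapply Rle_trans. exact H. apply Rle_trans with (Rabs K * t ^ N).
    apply Rmult_le_compat_r; [apply pow_le; lra| apply Rle_abs].
    apply Rmult_le_compat_l; [apply Rabs_pos| apply pow_le_mono_dec; [lra|lia]]. }
  assert (Hti0 : 0 < t ^ i) by (apply pow_lt; lra).
  simpl in Hineq.
  assert (Cmod (p i) <= (Rabs K + Sabs p N) * t).
  { apply Rmult_le_reg_r with (t ^ i). exact Hti0. nra. }
  assert ((Rabs K + Sabs p N) * t <= B * t) by (apply Rmult_le_compat_r; unfold B; lra).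
  assert (B * t <= Cmod (p i) / 2).
  { apply Rle_trans with (B * (Cmod (p i) / (2 * B))). apply Rmult_le_compat_l; lra.
    right. field. lra. }
  lra.
Qed.

Lemma Good_le c d : Good c -> (forall n, Cmod (d n) <= Cmod (c n)) -> Good d.
Proof.
  intros G H r Hr. destruct (G r Hr) as [M HM]. exists M. intros n.
  eapply Rle_trans; [|apply (HM n)]. apply Rmult_le_compat_r. apply pow_le; lra. apply H.
Qed.

Lemma Good_comb (a b : C) c d : Good c -> Good d -> Good (fun n => a * c n + b * d n)%C.
Proof.
  intros G1 G2 r Hr. destruct (G1 r Hr) as [M1 H1]. destruct (G2 r Hr) as [M2 H2].
  exists (Cmod a * M1 + Cmod b * M2). intros n.
  eapply Rle_trans. apply Rmult_le_compat_r. apply pow_le; lra. apply Cmod_triangle.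
  rewrite !Cmod_mult. rewrite Rmult_plus_distr_r, !Rmult_assoc.
  apply Rplus_le_compat; apply Rmult_le_compat_l; try apply Cmod_ge_0; auto.
Qed.

Lemma csum_comb (a b : C) c d z : Good c -> Good d -> Cmod z < 1 ->
  csum (fun n => a * c n + b * d n)%C z = (a * csum c z + b * csum d z)%C.
Proof.
  intros G1 G2 Hz. apply csum_eq. apply pseries_term.
  pose proof (good_conv c z G1 Hz) as H1. pose proof (good_conv d z G2 Hz) as H2.
  apply pseries_term in H1. apply pseries_term in H2.
  pose proof (is_series_plus _ _ _ _ (is_series_scal_l a _ _ H1) (is_series_scal_l b _ _ H2)) as H.
  eapply is_series_ext; [|exact H]. intros n. unfold term; simpl. unfold plus, scal; simpl.
  change (a * (Cpow z n * c n) + b * (Cpow z n * d n) = Cpow z n * (a * c n + b * d n))%C. ring.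
Qed.

Lemma coef_unique c d : Good c -> Good d -> (forall z, Cmod z < 1 -> csum c z = csum d z) ->
  forall n, c n = d n.
Proof.
  intros G1 G2 H n.
  set (e := fun n => (1 * c n + (-1) * d n)%C).
  assert (Ge : Good e) by (apply Good_comb; auto).
  destruct (tail_bound e (S n) (1/2) Ge ltac:(lra)) as [K HK].
  assert (He : e n = RtoC 0).
  { apply (coef_extract e (S n) K (1/2)); [lra| |lia].
    intros z Hz. specialize (HK z Hz).
    assert (Hz1 : Cmod z < 1) by lra.
    unfold e in HK at 1. rewrite csum_comb, H in HK by auto.
    replace (1 * csum d z + -1 * csum d z - fsum (term e z) (S n))%C with (- fsum (term e z) (S n))%C in HK by ring.
    rewrite Cmod_opp in HK. exact HK. }
  unfold e in He. replace (c n) with ((1 * c n + -1 * d n) + d n)%C by ring. rewrite He. ring.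
Qed.

Definition Dc (c : nat -> C) (n : nat) : C := (RtoC (INR (S n)) * c (S n))%C.

Lemma lin_geo a b n : 0 <= a < b -> INR n * a ^ n <= (a / (b - a)) * b ^ n.
Proof.
  intros Hab. destruct (Req_dec a 0) as [E|E].
  - subst. destruct n. simpl. unfold Rdiv. lra.
    simpl. unfold Rdiv. rewrite !Rmult_0_l. rewrite Rmult_0_r. lra.
  - set (t := (b - a) / a).
    assert (Ht : 0 < t) by (unfold t; apply Rdiv_lt_0_compat; lra).
    assert (Eb : b = a * (1 + t)) by (unfold t; field; lra).
    assert (Hp : 1 + INR n * t <= (1 + t) ^ n) by (apply Rle_pow_lin; lra).
    rewrite Eb, Rpow_mult_distr.
    replace (a / (a * (1 + t) - a)) with (/ t) by (unfold t; field; lra).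
    assert (0 < a ^ n) by (apply pow_lt; lra).
    apply Rmult_le_reg_l with t. lra.
    replace (t * (/ t * (a ^ n * (1 + t) ^ n))) with (a ^ n * (1 + t) ^ n) by (field; lra).
    assert (0 <= INR n) by apply pos_INR.
    nra.
Qed.

Lemma lin_geo1 a b n : 0 <= a < b -> INR (S n) * a ^ n <= (b / (b - a)) * b ^ n.
Proof.
  intros Hab. pose proof (lin_geo a b n Hab). rewrite S_INR.
  assert (a ^ n <= b ^ n) by (apply pow_incr; lra).
  replace (b / (b - a)) with (a / (b - a) + 1) by (field; lra). nra.
Qed.

Lemma Cmod_INR n : Cmod (RtoC (INR n)) = INR n.
Proof. rewrite Cmod_R, Rabs_pos_eq; auto using pos_INR. Qed.

Lemma Good_D c : Good c -> Good (Dc c).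
Proof.
  intros G r Hr. destruct (G ((1 + r) / 2)) as [M HM]. lra.
  set (r1 := (1 + r) / 2) in *.
  exists (M / (r1 - r)). intros n. unfold Dc. rewrite Cmod_mult, Cmod_INR.
  pose proof (lin_geo1 r r1 n ltac:(unfold r1; lra)) as L.
  specialize (HM (S n)).
  assert (0 <= Cmod (c (S n))) by apply Cmod_ge_0.
  apply Rle_trans with (Cmod (c (S n)) * ((r1 / (r1 - r)) * r1 ^ n)).
  replace (INR (S n) * Cmod (c (S n)) * r ^ n) with (Cmod (c (S n)) * (INR (S n) * r ^ n)) by ring.
  apply Rmult_le_compat_l; auto.
  replace (Cmod (c (S n)) * (r1 / (r1 - r) * r1 ^ n)) with ((Cmod (c (S n)) * r1 ^ S n) / (r1 - r)) by (simpl; field; unfold r1; lra).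
  unfold Rdiv. apply Rmult_le_compat_r. left; apply Rinv_0_lt_compat; unfold r1; lra. exact HM.
Qed.

Lemma e_bound z h rho l : 0 <= rho -> Cmod z <= rho -> Cmod (z + h) <= rho ->
  rho * Cmod (Cpow (z + h) l - Cpow z l)%C <= INR l * Cmod h * rho ^ l.
Proof.
  intros Hr Hz Hzh. induction l.
  - replace (Cpow (z + h) 0 - Cpow z 0)%C with (RtoC 0) by (simpl; ring). rewrite Cmod_0. simpl. lra.
  - replace (Cpow (z + h) (S l) - Cpow z (S l))%C with ((z + h) * (Cpow (z + h) l - Cpow z l) + h * Cpow z l)%C
      by (simpl; ring).
    assert (T : Cmod ((z + h) * (Cpow (z + h) l - Cpow z l) + h * Cpow z l)%C <=
                Cmod (z + h) * Cmod (Cpow (z + h) l - Cpow z l)%C + Cmod h * Cmod z ^ l).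
    { eapply Rle_trans. apply Cmod_triangle. rewrite !Cmod_mult, Cmod_pow. lra. }
    assert (0 <= Cmod (Cpow (z + h) l - Cpow z l)%C) by apply Cmod_ge_0.
    assert (0 <= Cmod h) by apply Cmod_ge_0.
    assert (Cmod z ^ l <= rho ^ l) by (apply pow_incr; split; [apply Cmod_ge_0|lra]).
    rewrite S_INR. simpl pow.
    apply Rle_trans with (rho * (Cmod (z + h) * Cmod (Cpow (z + h) l - Cpow z l)%C + Cmod h * Cmod z ^ l)).
    apply Rmult_le_compat_l; auto.
    assert (rho * (Cmod (z + h) * Cmod (Cpow (z + h) l - Cpow z l)%C) <= rho * (INR l * Cmod h * rho ^ l)).
    { apply Rmult_le_compat_l; auto. 
      apply Rle_trans with (rho * Cmod (Cpow (z + h) l - Cpow z l)%C). apply Rmult_le_compat_r; auto. exact IHl. }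
    assert (rho * (Cmod h * Cmod z ^ l) <= rho * (Cmod h * rho ^ l)).
    { apply Rmult_le_compat_l; auto. apply Rmult_le_compat_l; auto. }
    nra.
Qed.

Definition Ef (z h : C) (l : nat) : C :=
  match l with O => RtoC 0 | S n => (Cpow (z + h) (S n) - Cpow z (S n) - RtoC (INR (S n)) * h * Cpow z n)%C end.

Lemma E_bound z h rho l : 0 <= rho -> Cmod z <= rho -> Cmod (z + h) <= rho ->
  rho ^ 2 * Cmod (Ef z h l) <= INR l ^ 2 * Cmod h ^ 2 * rho ^ l.
Proof.
  intros Hr Hz Hzh. destruct l as [|n].
  - simpl. rewrite Cmod_0. lra.
  - induction n.
    + assert (E0 : Ef z h 1 = RtoC 0) by (simpl; ring). rewrite E0, Cmod_0.
      assert (0 <= INR 1 ^ 2 * Cmod h ^ 2 * rho ^ 1) by (apply Rmult_le_pos; [apply Rmult_le_pos; apply pow_le; try apply pos_INR; apply Cmod_ge_0| apply pow_le; lra]).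
      lra.
    + replace (Ef z h (S (S n))) with (z * Ef z h (S n) + h * (Cpow (z + h) (S n) - Cpow z (S n)))%C
        by (unfold Ef; rewrite (S_INR (S n)), RtoC_plus; simpl Cpow; ring).
      pose proof (e_bound z h rho (S n) Hr Hz Hzh) as He.
      assert (T : Cmod (z * Ef z h (S n) + h * (Cpow (z + h) (S n) - Cpow z (S n)))%C <=
          Cmod z * Cmod (Ef z h (S n)) + Cmod h * Cmod (Cpow (z + h) (S n) - Cpow z (S n))%C).
      { eapply Rle_trans. apply Cmod_triangle. rewrite !Cmod_mult. lra. }
      assert (0 <= Cmod (Ef z h (S n))) by apply Cmod_ge_0.
      assert (0 <= Cmod h) by apply Cmod_ge_0.
      assert (0 <= Cmod (Cpow (z + h) (S n) - Cpow z (S n))%C) by apply Cmod_ge_0.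
      assert (K1 : rho ^ 2 * (Cmod z * Cmod (Ef z h (S n))) <= rho * (INR (S n) ^ 2 * Cmod h ^ 2 * rho ^ S n)).
      { replace (rho ^ 2 * (Cmod z * Cmod (Ef z h (S n)))) with (Cmod z * (rho ^ 2 * Cmod (Ef z h (S n)))) by ring.
        apply Rmult_le_compat; auto. apply Cmod_ge_0. apply Rmult_le_pos; [apply pow_le; lra|auto]. }
      assert (K2 : rho ^ 2 * (Cmod h * Cmod (Cpow (z + h) (S n) - Cpow z (S n))%C) <= rho * Cmod h * (INR (S n) * Cmod h * rho ^ S n)).
      { replace (rho ^ 2 * (Cmod h * Cmod (Cpow (z + h) (S n) - Cpow z (S n))%C)) with (rho * Cmod h * (rho * Cmod (Cpow (z + h) (S n) - Cpow z (S n))%C)) by ring.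
        apply Rmult_le_compat_l. apply Rmult_le_pos; auto. exact He. }
      assert (K3 : rho ^ 2 * Cmod (z * Ef z h (S n) + h * (Cpow (z + h) (S n) - Cpow z (S n)))%C <=
          rho * (INR (S n) ^ 2 * Cmod h ^ 2 * rho ^ S n) + rho * Cmod h * (INR (S n) * Cmod h * rho ^ S n)).
      { eapply Rle_trans. apply Rmult_le_compat_l. apply pow_le; lra. exact T. lra. }
      eapply Rle_trans. exact K3.
      assert (0 <= INR (S n)) by apply pos_INR.
      assert (0 <= rho ^ S n) by (apply pow_le; lra).
      assert (0 <= Cmod h ^ 2) by (apply pow_le; auto).
      rewrite (S_INR (S n)). set (N := INR (S n)) in *. set (P := rho ^ S n) in *.
      replace (rho ^ S (S n)) with (rho * P) by (unfold P; simpl; ring).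
      assert (X : 0 <= (N + 1) * (Cmod h ^ 2 * (rho * P))).
      { apply Rmult_le_pos. lra. apply Rmult_le_pos. auto. apply Rmult_le_pos; auto. }
      replace ((N + 1) ^ 2 * Cmod h ^ 2 * (rho * P)) with
        (rho * (N ^ 2 * Cmod h ^ 2 * P) + rho * Cmod h * (N * Cmod h * P) + (N + 1) * (Cmod h ^ 2 * (rho * P))) by ring.
      lra.
Qed.

Lemma shift_series (v : nat -> C) (h l : C) : is_series v l ->
  is_series (fun k => match k with O => RtoC 0 | S n => (h * v n)%C end) (h * l)%C.
Proof.
  intros H. apply is_series_decr_1.
  assert (H2 := is_series_scal_l h _ _ H).
  match goal with |- is_series _ ?x => replace x with (scal h l) end.
  eapply is_series_ext; [|exact H2]. intros n. reflexivity.
  unfold plus, opp, scal; simpl. change (h * l = h * l + - RtoC 0)%C. ring.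
Qed.

Lemma taylor2 c rho : Good c -> 0 < rho < 1 -> exists K, 0 <= K /\ forall z h,
  Cmod z <= rho -> Cmod (z + h) <= rho ->
  Cmod (csum c (z + h) - csum c z - h * csum (Dc c) z)%C <= K * Cmod h ^ 2.
Proof.
  intros G Hr.
  set (r1 := rho + (1 - rho) / 3). set (r2 := rho + 2 * (1 - rho) / 3).
  destruct (good_at c r2 G) as (M & r3 & H31 & H32 & HM0 & HM). unfold r2; lra.
  assert (Hr1 : rho < r1 /\ r1 < r2 /\ 0 < r2) by (unfold r1, r2; lra).
  set (C1 := rho / (r1 - rho)). set (C2 := r1 / (r2 - r1)). set (q := r2 / r3).
  assert (HC1 : 0 <= C1) by (unfold C1; apply Rmult_le_pos; [lra| left; apply Rinv_0_lt_compat; lra]).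
  assert (HC2 : 0 <= C2) by (unfold C2; apply Rmult_le_pos; [lra| left; apply Rinv_0_lt_compat; lra]).
  assert (Hq : 0 <= q < 1).
  { unfold q. split. apply Rmult_le_pos; [lra| left; apply Rinv_0_lt_compat; lra].
    apply Rmult_lt_reg_r with r3; [lra|]. unfold Rdiv. rewrite Rmult_assoc, Rinv_l by lra. lra. }
  exists (C1 * C2 * M / (rho ^ 2 * (1 - q))). split.
  { apply Rmult_le_pos. apply Rmult_le_pos; [apply Rmult_le_pos|]; auto.
    left; apply Rinv_0_lt_compat. apply Rmult_lt_0_compat. apply pow_lt; lra. lra. }
  intros z h Hz Hzh.
  assert (Hz1 : Cmod z < 1) by lra. assert (Hzh1 : Cmod (z + h) < 1) by lra.
  pose proof (good_conv c (z + h) G Hzh1) as S1. apply pseries_term in S1.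
  pose proof (good_conv c z G Hz1) as S2. apply pseries_term in S2.
  pose proof (good_conv (Dc c) z (Good_D c G) Hz1) as S3. apply pseries_term in S3.
  pose proof (shift_series _ h _ S3) as S4.
  pose proof (is_series_minus _ _ _ _ (is_series_minus _ _ _ _ S1 S2) S4) as S5.
  assert (S6 : is_series (fun l => (c l * Ef z h l)%C) (csum c (z + h) - csum c z - h * csum (Dc c) z)%C).
  { eapply is_series_ext; [|exact S5]. intros l. unfold plus, opp; simpl. unfold term, Dc.
    destruct l as [|n]. simpl. ring. unfold Ef. change (Cpow (z + h) (S n) * c (S n) + - (Cpow z (S n) * c (S n)) + - (h * (Cpow z n * (RtoC (INR (S n)) * c (S n)))) = c (S n) * (Cpow (z + h) (S n) - Cpow z (S n) - RtoC (INR (S n)) * h * Cpow z n))%C. ring. }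
  set (B := Cmod h ^ 2 / rho ^ 2 * (C1 * C2 * M)).
  pose proof (is_series_scal_l (K:=R_AbsRing) (V:=R_NormedModule) B _ _ (is_series_geom q ltac:(rewrite Rabs_pos_eq; lra))) as SG.
  eapply Rle_trans. apply (series_norm_le _ _ _ _ S6 SG).
  - intros l. change (Cmod (c l * Ef z h l)%C <= B * q ^ l). rewrite Cmod_mult.
    pose proof (E_bound z h rho l ltac:(lra) Hz Hzh) as HE.
    assert (Hrho2 : 0 < rho ^ 2) by (apply pow_lt; lra).
    assert (HEf : Cmod (Ef z h l) <= INR l ^ 2 * Cmod h ^ 2 * rho ^ l / rho ^ 2).
    { apply Rmult_le_reg_l with (rho ^ 2); auto. unfold Rdiv. 
      replace (rho ^ 2 * (INR l ^ 2 * Cmod h ^ 2 * rho ^ l * / rho ^ 2)) with (INR l ^ 2 * Cmod h ^ 2 * rho ^ l) by (field; lra). exact HE. }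
    assert (L1 : INR l * rho ^ l <= C1 * r1 ^ l) by (apply lin_geo; lra).
    assert (L2 : INR l * r1 ^ l <= C2 * r2 ^ l) by (apply lin_geo; lra).
    assert (L3 : INR l ^ 2 * rho ^ l <= C1 * C2 * r2 ^ l).
    { replace (INR l ^ 2 * rho ^ l) with (INR l * (INR l * rho ^ l)) by ring.
      apply Rle_trans with (INR l * (C1 * r1 ^ l)). apply Rmult_le_compat_l. apply pos_INR. exact L1.
      replace (INR l * (C1 * r1 ^ l)) with (C1 * (INR l * r1 ^ l)) by ring.
      rewrite Rmult_assoc. apply Rmult_le_compat_l; auto. }
    specialize (HM l).
    assert (Hcq : Cmod (c l) * r2 ^ l <= M * q ^ l).
    { unfold q, Rdiv. rewrite Rpow_mult_distr, pow_inv.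
      assert (0 < r3 ^ l) by (apply pow_lt; lra).
      replace (Cmod (c l) * r2 ^ l) with ((Cmod (c l) * r3 ^ l) * (r2 ^ l * / r3 ^ l)) by (field; lra).
      apply Rmult_le_compat_r. apply Rmult_le_pos. apply pow_le; lra. left; apply Rinv_0_lt_compat; lra. exact HM. }
    assert (0 <= Cmod (c l)) by apply Cmod_ge_0.
    apply Rle_trans with (Cmod (c l) * (INR l ^ 2 * Cmod h ^ 2 * rho ^ l / rho ^ 2)).
    apply Rmult_le_compat_l; auto.
    unfold B. unfold Rdiv.
    replace (Cmod (c l) * (INR l ^ 2 * Cmod h ^ 2 * rho ^ l * / rho ^ 2)) with
      (Cmod h ^ 2 * / rho ^ 2 * (Cmod (c l) * (INR l ^ 2 * rho ^ l))) by ring.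
    replace (Cmod h ^ 2 * / rho ^ 2 * (C1 * C2 * M) * q ^ l) with (Cmod h ^ 2 * / rho ^ 2 * (C1 * C2 * (M * q ^ l))) by ring.
    apply Rmult_le_compat_l. apply Rmult_le_pos. apply pow_le, Cmod_ge_0. left; apply Rinv_0_lt_compat; auto.
    apply Rle_trans with (Cmod (c l) * (C1 * C2 * r2 ^ l)). apply Rmult_le_compat_l; auto.
    replace (Cmod (c l) * (C1 * C2 * r2 ^ l)) with (C1 * C2 * (Cmod (c l) * r2 ^ l)) by ring.
    apply Rmult_le_compat_l. apply Rmult_le_pos; auto. exact Hcq.
  - change (B * / (1 - q) <= C1 * C2 * M / (rho ^ 2 * (1 - q)) * Cmod h ^ 2).
    unfold B. right. field. lra.
Qed.

Lemma cplus_minus_id (y z : C) : y = (z + (y + - z))%C.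
Proof. ring. Qed.

Lemma deriv_csum c z : Good c -> Cmod z < 1 -> is_derive (csum c) z (csum (Dc c) z).
Proof.
  intros G Hz.
  set (rho := (1 + Cmod z) / 2).
  assert (Hz0 := Cmod_ge_0 z).
  destruct (taylor2 c rho G) as (K & HK0 & HK). unfold rho; lra.
  split. apply is_linear_scal_l.
  intros x Hx. apply (is_filter_lim_locally_unique (K:=C_AbsRing) (V:=AbsRing_NormedModule C_AbsRing)) in Hx. subst x.
  intros eps.
  set (d := Rmin (rho - Cmod z) (eps / (K + 1)) / 2).
  assert (Hd : 0 < d). { unfold d. apply Rdiv_lt_0_compat; [|lra]. apply Rmin_pos. unfold rho; lra.
    apply Rdiv_lt_0_compat. apply cond_pos. lra. }
  exists (mkposreal d Hd). intros y Hy.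
  change (Cmod (minus y z) < d) in Hy.
  set (h := minus y z) in *.
  assert (Hh0 := Cmod_ge_0 h).
  assert (Hh : Cmod h < Rmin (rho - Cmod z) (eps / (K + 1))).
  { apply Rlt_le_trans with d. exact Hy. unfold d. pose proof (Rmin_r (rho - Cmod z) (eps / (K + 1))).
    assert (0 < Rmin (rho - Cmod z) (eps / (K + 1))) by (apply Rmin_pos; [unfold rho; lra| apply Rdiv_lt_0_compat; [apply cond_pos|lra]]). lra. }
  assert (Hh1 : Cmod h < rho - Cmod z) by (eapply Rlt_le_trans; [exact Hh| apply Rmin_l]).
  assert (Hh2 : Cmod h < eps / (K + 1)) by (eapply Rlt_le_trans; [exact Hh| apply Rmin_r]).
  assert (Ey : @eq C y (Cplus z h)). { unfold h. exact (cplus_minus_id y z). }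
  assert (Hzh : Cmod (z + h) <= rho) by (eapply Rle_trans; [apply Cmod_triangle| lra]).
  specialize (HK z h ltac:(unfold rho; lra) Hzh).
  change (Cmod (csum c y - csum c z - h * csum (Dc c) z)%C <= eps * Cmod h).
  rewrite Ey.
  eapply Rle_trans. exact HK.
  replace (K * Cmod h ^ 2) with ((K * Cmod h) * Cmod h) by ring.
  apply Rmult_le_compat_r; auto.
  apply Rle_trans with ((K + 1) * Cmod h). nra.
  apply Rmult_lt_compat_l with (r := K + 1) in Hh2; [|lra].
  replace ((K + 1) * (eps / (K + 1))) with (pos eps) in Hh2 by (field; lra). lra.
Qed.

Definition ee (t : R) : C := (cos t, sin t).

Lemma ee_mult a b : (ee a * ee b)%C = ee (a + b).
Proof. unfold ee, Cmult; simpl. rewrite cos_plus, sin_plus. f_equal; ring. Qed.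

Lemma ee_0 : ee 0 = RtoC 1.
Proof. unfold ee, RtoC. rewrite cos_0, sin_0. reflexivity. Qed.

Lemma Cmod_ee t : Cmod (ee t) = 1.
Proof. unfold Cmod, ee; simpl. pose proof (sin2_cos2 t). unfold Rsqr in H. replace (cos t * (cos t * 1) + sin t * (sin t * 1)) with 1 by lra. apply sqrt_1. Qed.

Lemma ee_conj t : Cconj (ee t) = ee (- t).
Proof. unfold Cconj, ee; simpl. rewrite cos_neg, sin_neg. reflexivity. Qed.

Lemma ee_pow t n : Cpow (ee t) n = ee (INR n * t).
Proof.
  induction n. simpl. rewrite Rmult_0_l, ee_0. reflexivity.
  simpl Cpow. rewrite IHn, ee_mult. f_equal. rewrite S_INR. ring.
Qed.

Lemma ee_2PI_nat n : ee (2 * PI * INR n) = RtoC 1.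
Proof.
  induction n. rewrite Rmult_0_r, ee_0. reflexivity.
  rewrite S_INR. replace (2 * PI * (INR n + 1)) with (2 * PI * INR n + 2 * PI) by ring.
  rewrite <- ee_mult, IHn. unfold ee. rewrite cos_2PI, sin_2PI. unfold RtoC, Cmult; simpl. f_equal; ring.
Qed.

Lemma ee_2PI_int a b : ee (2 * PI * (INR a - INR b)) = RtoC 1.
Proof.
  replace (2 * PI * (INR a - INR b)) with (2 * PI * INR a + - (2 * PI * INR b)) by ring.
  rewrite <- ee_mult, ee_2PI_nat.
  replace (ee (- (2 * PI * INR b))) with (Cconj (ee (2 * PI * INR b))) by apply ee_conj.
  rewrite ee_2PI_nat. unfold Cconj, Cmult, RtoC; simpl. f_equal; ring.
Qed.

Lemma ee_ne_1 x : 0 < Rabs x < 2 * PI -> ee x <> RtoC 1.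
Proof.
  intros Hx E. unfold ee, RtoC in E. injection E as Ec Es.
  assert (Hc : cos (2 * (x / 2)) = 1) by (replace (2 * (x / 2)) with x by field; exact Ec).
  rewrite cos_2a_sin in Hc.
  assert (Hs : sin (x / 2) = 0) by nra.
  pose proof PI_RGT_0.
  destruct (Rle_or_lt 0 x).
  - rewrite Rabs_pos_eq in Hx by lra. pose proof (sin_gt_0 (x / 2) ltac:(lra) ltac:(lra)). lra.
  - rewrite Rabs_left in Hx by lra. pose proof (sin_gt_0 (- (x / 2)) ltac:(lra) ltac:(lra)).
    rewrite sin_neg in H1. lra.
Qed.

Lemma fsum_geom (w : C) N : (fsum (Cpow w) N * (w - 1))%C = (Cpow w N - 1)%C.
Proof. induction N; simpl. ring. rewrite Cmult_plus_distr_r, IHN. ring. Qed.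

Definition th (N j : nat) : R := 2 * PI * INR j / INR N.
Definition G (N : nat) (s : R) : C := fsum (fun j => ee (th N j * s)) N.

Lemma G_zero N a b : (a <> b)%nat -> (a < b + N)%nat -> (b < a + N)%nat ->
  G N (INR a - INR b) = RtoC 0.
Proof.
  intros Hab H1 H2.
  assert (HN : (0 < N)%nat) by lia.
  assert (HN' : 0 < INR N) by (apply lt_0_INR; lia).
  set (x := 2 * PI * (INR a - INR b) / INR N).
  assert (Eg : G N (INR a - INR b) = fsum (Cpow (ee x)) N).
  { unfold G. apply fsum_ext. intros j _. rewrite ee_pow. f_equal. unfold th, x. field. lra. }
  rewrite Eg.
  assert (Hw : ee x <> RtoC 1).
  { apply ee_ne_1. pose proof PI_RGT_0.
    assert (Hd : 0 < Rabs (INR a - INR b) < INR N).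
    { destruct (Nat.lt_ge_cases a b).
      - rewrite Rabs_left. split. apply lt_INR in H0. lra.
        assert (INR b < INR a + INR N) by (rewrite <- plus_INR; apply lt_INR; lia). lra.
        apply lt_INR in H0. lra.
      - assert (a > b)%nat by lia. apply lt_INR in H3. rewrite Rabs_pos_eq by lra. split. lra.
        assert (INR a < INR b + INR N) by (rewrite <- plus_INR; apply lt_INR; lia). lra. }
    unfold x. unfold Rdiv. rewrite Rabs_mult, Rabs_mult, Rabs_mult.
    rewrite (Rabs_pos_eq 2), (Rabs_pos_eq PI), (Rabs_pos_eq (/ INR N)) by (try lra; left; apply Rinv_0_lt_compat; lra).
    split. apply Rmult_lt_0_compat. apply Rmult_lt_0_compat. lra. lra. apply Rinv_0_lt_compat; lra.
    apply Rmult_lt_reg_r with (INR N). lra. rewrite Rmult_assoc, Rinv_l by lra.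
    rewrite Rmult_1_r. nra. }
  pose proof (fsum_geom (ee x) N) as HG.
  rewrite ee_pow in HG. replace (INR N * x) with (2 * PI * (INR a - INR b)) in HG by (unfold x; field; lra).
  rewrite ee_2PI_int in HG. replace (RtoC 1 - RtoC 1)%C with (RtoC 0) in HG by ring.
  destruct (Ceq_dec (fsum (Cpow (ee x)) N) (RtoC 0)) as [E|E]. exact E.
  exfalso. apply Hw. 
  assert (ee x - 1 = RtoC 0)%C.
  { apply (f_equal (fun y => y / fsum (Cpow (ee x)) N)%C) in HG.
    replace (fsum (Cpow (ee x)) N * (ee x - 1) / fsum (Cpow (ee x)) N)%C with (ee x - 1)%C in HG by (field; exact E).
    rewrite HG. field. exact E. }
  replace (ee x) with ((ee x - 1) + 1)%C by ring. rewrite H. ring.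
Qed.

Lemma G_0 N : G N 0 = RtoC (INR N).
Proof.
  unfold G. induction N. reflexivity.
  simpl fsum. rewrite Rmult_0_r, ee_0.
  replace (fsum (fun j => ee (th (S N) j * 0)) N) with (RtoC (INR N)).
  rewrite S_INR, RtoC_plus. reflexivity.
  rewrite <- IHN. apply fsum_ext. intros; rewrite !Rmult_0_r. reflexivity.
Qed.

Fixpoint rsum (u : nat -> R) (N : nat) : R := match N with O => 0 | S k => rsum u k + u k end.

Lemma fsum_norm (u : nat -> C) N : Cmod (fsum u N) <= rsum (fun j => Cmod (u j)) N.
Proof. induction N; simpl. rewrite Cmod_0; lra. eapply Rle_trans. apply Cmod_triangle. lra. Qed.

Lemma rsum_le_N (u : nat -> R) N : (forall j, u j <= 1) -> rsum u N <= INR N.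
Proof. intros H. induction N. simpl; lra. simpl rsum. rewrite S_INR. specialize (H N). lra. Qed.

Lemma G_bound N s : Cmod (G N s) <= INR N.
Proof.
  unfold G. eapply Rle_trans. apply fsum_norm.
  apply rsum_le_N. intros j. rewrite Cmod_ee. lra.
Qed.

Lemma fsum_series (u : nat -> nat -> C) (L : nat -> C) N :
  (forall j, is_series (u j) (L j)) -> is_series (fun l => fsum (fun j => u j l) N) (fsum L N).
Proof.
  intros H. induction N.
  - simpl. eapply is_series_ext; [|apply (is_series_fin (fun _ => RtoC 0) 0)]; [reflexivity| intros; reflexivity].
  - simpl. apply (is_series_plus _ _ _ _ IHN (H N)).
Qed.

Lemma fsum_scal (c : C) (f : nat -> C) N : fsum (fun j => c * f j)%C N = (c * fsum f N)%C.
Proof. induction N; simpl. ring. rewrite IHN. ring. Qed.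

Lemma fsum_plus (f g : nat -> C) N : fsum (fun j => f j + g j)%C N = (fsum f N + fsum g N)%C.
Proof. induction N; simpl. ring. rewrite IHN. ring. Qed.

Lemma fsum_conj (f : nat -> C) N : Cconj (fsum f N) = fsum (fun j => Cconj (f j)) N.
Proof. induction N; simpl. unfold Cconj, RtoC; simpl. f_equal; ring. rewrite Cplus_conj, IHN. reflexivity. Qed.

Lemma fsum_re (f : nat -> C) N : Re (fsum f N) = rsum (fun j => Re (f j)) N.
Proof. induction N. reflexivity. change (Re (fsum f N + f N)%C = rsum (fun j => Re (f j)) N + Re (f N)). rewrite re_plus, IHN. reflexivity. Qed.

Lemma Cpow_scal_R (r : R) (w : C) l : Cpow (RtoC r * w)%C l = (RtoC (r ^ l) * Cpow w l)%C.
Proof. induction l; simpl. ring. rewrite IHl, RtoC_mult. ring. Qed.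

Definition zj (r : R) (N j : nat) : C := (RtoC r * ee (th N j))%C.
Definition Aser (p : nat -> C) (r : R) (N : nat) (s : R) : C :=
  fsum (fun j => (csum p (zj r N j) * ee (- (th N j * s)))%C) N.

Lemma Cmod_zj r N j : 0 <= r -> Cmod (zj r N j) = r.
Proof. intros. unfold zj. rewrite Cmod_mult, Cmod_ee, Cmod_R, Rabs_pos_eq; lra. Qed.

Lemma A_series p r N s : Good p -> 0 <= r < 1 ->
  is_series (fun l => (p l * RtoC (r ^ l) * G N (INR l - s))%C) (Aser p r N s).
Proof.
  intros Gp Hr. unfold Aser.
  eapply is_series_ext; [| apply fsum_series with (u := fun j l => (term p (zj r N j) l * ee (- (th N j * s)))%C)].
  - intros l. unfold G. rewrite <- fsum_scal. apply fsum_ext. intros j _.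
    unfold term, zj. rewrite Cpow_scal_R, ee_pow.
    replace (RtoC (r ^ l) * ee (INR l * th N j) * p l * ee (- (th N j * s)))%C with
      (p l * RtoC (r ^ l) * (ee (INR l * th N j) * ee (- (th N j * s))))%C by ring.
    rewrite ee_mult. f_equal. f_equal. ring.
  - intros j. pose proof (good_conv p (zj r N j) Gp ltac:(rewrite Cmod_zj; lra)) as H.
    apply pseries_term in H.
    pose proof (is_series_scal_l (ee (- (th N j * s))) _ _ H) as H2.
    match goal with |- is_series _ ?v => replace v with (scal (ee (- (th N j * s))) (csum p (zj r N j))) end.
    eapply is_series_ext; [|exact H2]. intros l. unfold scal; simpl. unfold mult; simpl. 
    change (ee (- (th N j * s)) * term p (zj r N j) l = term p (zj r N j) l * ee (- (th N j * s)))%C. ring.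
    unfold scal; simpl. unfold mult; simpl. ring.
Qed.

Lemma series_tail_geo (u : nat -> C) L K0 B q : is_series u L -> 0 <= q < 1 -> 0 <= B ->
  (forall l, (l < K0)%nat -> u l = RtoC 0) -> (forall l, Cmod (u l) <= B * q ^ l) ->
  Cmod L <= B * (q ^ K0 / (1 - q)).
Proof.
  intros Hu Hq HB Hz Hb.
  pose proof (is_series_scal_l (K:=R_AbsRing) (V:=R_NormedModule) B _ _ (trunc_geom q K0 Hq)) as HG.
  apply (series_norm_le _ _ _ _ Hu HG).
  intros l. change (Cmod (u l) <= B * (if (l <? K0)%nat then 0 else q ^ l)).
  destruct (Nat.ltb_spec l K0). rewrite Hz by auto. rewrite Cmod_0. lra. apply Hb.
Qed.

Lemma single_series (c : C) k : is_series (fun l => if (l =? k)%nat then c else RtoC 0) c.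
Proof.
  assert (E : fsum (fun l => if (l =? k)%nat then c else RtoC 0) (S k) = c).
  { simpl. rewrite Nat.eqb_refl. replace (fsum (fun l => if (l =? k)%nat then c else RtoC 0) k) with (RtoC 0). ring.
    assert (forall n, (n <= k)%nat -> fsum (fun l => if (l =? k)%nat then c else RtoC 0) n = RtoC 0).
    { induction n; intros Hn. reflexivity. simpl. rewrite IHn by lia. destruct (Nat.eqb_spec n k). lia. ring. }
    symmetry. apply H. lia. }
  pose proof (is_series_fin (fun l => if (l =? k)%nat then c else RtoC 0) (S k)) as H.
  rewrite E in H. apply H. intros l Hl. destruct (Nat.eqb_spec l k). lia. reflexivity.
Qed.

Lemma pow_q_mono q a b : 0 <= q <= 1 -> (a <= b)%nat -> q ^ b <= q ^ a.
Proof. intros. apply pow_le_mono_dec; auto. Qed.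

Lemma rsum_ext (u v : nat -> R) N : (forall j, u j = v j) -> rsum u N = rsum v N.
Proof. intros H. induction N; simpl; auto. rewrite IHN, H. reflexivity. Qed.

Lemma rsum_lin (f : nat -> R) a b N : rsum (fun j => a * (f j - b)) N = a * (rsum f N - INR N * b).
Proof. induction N. simpl. ring. simpl rsum. rewrite IHN, S_INR. ring. Qed.

Section Carath.
Variable p : nat -> C.
Variable beta : R.
Hypothesis Gp : Good p.
Hypothesis p0 : p 0%nat = RtoC 1.
Hypothesis Hre : forall z, Cmod z < 1 -> beta < Re (csum p z).

Lemma carath_step r M q k N : 0 <= r < 1 -> 0 <= q < 1 -> 0 <= M ->
  (forall l, Cmod (p l) * r ^ l <= M * q ^ l) -> (1 <= k)%nat -> (k < N)%nat ->
  Cmod (p k) * r ^ k <= 2 * (1 - beta) + 4 * (M * (q ^ (N - k) / (1 - q))).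
Proof.
  intros Hr Hq HM Hb Hk HN.
  assert (HN0 : 0 < INR N) by (apply lt_0_INR; lia).
  set (T := INR N * M * (q ^ (N - k) / (1 - q))).
  assert (Hqq : forall a, (N - k <= a)%nat -> q ^ a / (1 - q) <= q ^ (N - k) / (1 - q)).
  { intros a Ha. unfold Rdiv. apply Rmult_le_compat_r. left; apply Rinv_0_lt_compat; lra.
    apply pow_q_mono; [lra|lia]. }
  assert (Hub : forall l s, Cmod (p l * RtoC (r ^ l) * G N (INR l - s))%C <= INR N * M * q ^ l).
  { intros l s. rewrite !Cmod_mult, Cmod_R, Rabs_pos_eq by (apply pow_le; lra).
    specialize (Hb l). pose proof (G_bound N (INR l - s)).
    assert (0 <= Cmod (p l) * r ^ l) by (apply Rmult_le_pos; [apply Cmod_ge_0|apply pow_le; lra]).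
    replace (INR N * M * q ^ l) with ((M * q ^ l) * INR N) by ring.
    apply Rmult_le_compat; auto. apply Cmod_ge_0. }
  set (A1 := Aser p r N (INR k)).
  assert (T1 : Cmod (A1 - RtoC (INR N) * (p k * RtoC (r ^ k)))%C <= T).
  { pose proof (is_series_minus _ _ _ _ (A_series p r N (INR k) Gp Hr) (single_series (RtoC (INR N) * (p k * RtoC (r ^ k)))%C k)) as S.
    eapply Rle_trans. apply (series_tail_geo _ _ (N + k) (INR N * M) q S Hq).
    apply Rmult_le_pos; lra.
    - intros l Hl. unfold plus, opp; simpl. destruct (Nat.eqb_spec l k).
      + subst. rewrite Rminus_diag, G_0. ring.
      + rewrite G_zero by lia. ring.
    - intros l. unfold plus, opp; simpl. destruct (Nat.eqb_spec l k).
      + subst. rewrite Rminus_diag, G_0. 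
        replace (p k * RtoC (r ^ k) * RtoC (INR N) + - (RtoC (INR N) * (p k * RtoC (r ^ k))))%C with (RtoC 0) by ring.
        rewrite Cmod_0. apply Rmult_le_pos. apply Rmult_le_pos; lra. apply pow_le; lra.
      + replace (p l * RtoC (r ^ l) * G N (INR l - INR k) + - RtoC 0)%C with (p l * RtoC (r ^ l) * G N (INR l - INR k))%C by ring.
        apply Hub.
    - unfold T. apply Rmult_le_compat_l. apply Rmult_le_pos; lra. apply Hqq. lia. }
  set (A2 := Aser p r N (- INR k)).
  assert (T2 : Cmod A2 <= T).
  { pose proof (A_series p r N (- INR k) Gp Hr) as S.
    eapply Rle_trans. apply (series_tail_geo _ _ (N - k) (INR N * M) q S Hq).
    apply Rmult_le_pos; lra.
    - intros l Hl. replace (INR l - - INR k) with (INR (l + k) - INR 0) by (rewrite plus_INR; simpl; ring).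
      rewrite G_zero by lia. ring.
    - intros l. apply Hub.
    - unfold T. right. reflexivity. }
  set (A0 := Aser p r N 0).
  assert (T0 : Cmod (A0 - RtoC (INR N))%C <= T).
  { pose proof (is_series_minus _ _ _ _ (A_series p r N 0 Gp Hr) (single_series (RtoC (INR N)) 0)) as S.
    eapply Rle_trans. apply (series_tail_geo _ _ N (INR N * M) q S Hq).
    apply Rmult_le_pos; lra.
    - intros l Hl. unfold plus, opp; simpl. destruct (Nat.eqb_spec l 0).
      + subst. simpl. rewrite Rminus_diag, G_0, p0. replace (r ^ 0) with 1 by reflexivity. ring.
      + rewrite Rminus_0_r. replace (INR l) with (INR l - INR 0) by (simpl; ring).
        rewrite G_zero by lia. ring.
    - intros l. unfold plus, opp; simpl. destruct (Nat.eqb_spec l 0).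
      + subst. simpl. rewrite Rminus_diag, G_0, p0.
        replace (RtoC 1 * RtoC 1 * RtoC (INR N) + - RtoC (INR N))%C with (RtoC 0) by ring.
        rewrite Cmod_0. apply Rmult_le_pos. apply Rmult_le_pos; lra. lra.
      + replace (p l * RtoC (r ^ l) * G N (INR l - 0) + - RtoC 0)%C with (p l * RtoC (r ^ l) * G N (INR l - 0))%C by ring.
        apply Hub.
    - unfold T. apply Rmult_le_compat_l. apply Rmult_le_pos; lra. apply Hqq. lia. }
  set (P := fun j => csum p (zj r N j)).
  set (w := fun j => ee (- (th N j * INR k))).
  assert (E1 : (A1 + Cconj A2)%C = fsum (fun j => RtoC (2 * (Re (P j) - beta)) * w j)%C N).
  { unfold A1, A2, Aser. rewrite fsum_conj, <- fsum_plus.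
    transitivity (fsum (fun j => RtoC (2 * (Re (P j) - beta)) * w j + RtoC (2 * beta) * ee (th N j * (INR 0 - INR k)))%C N).
    - apply fsum_ext. intros j _. rewrite Cmult_conj, ee_conj.
      replace (- - (th N j * - INR k)) with (- (th N j * INR k)) by ring.
      replace (th N j * (INR 0 - INR k)) with (- (th N j * INR k)) by (simpl; ring).
      fold (P j). fold (w j).
      replace (RtoC (2 * (Re (P j) - beta)) * w j + RtoC (2 * beta) * w j)%C with (RtoC (2 * Re (P j)) * w j)%C
        by (rewrite <- Cmult_plus_distr_r, <- RtoC_plus; f_equal; f_equal; ring).
      replace (P j * w j + Cconj (P j) * w j)%C with ((P j + Cconj (P j)) * w j)%C by ring. f_equal.
      destruct (P j) as [x y]. unfold Cplus, Cconj, RtoC, Re; simpl. f_equal; ring.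
    - rewrite fsum_plus, fsum_scal. fold (G N (INR 0 - INR k)). rewrite G_zero by lia. ring. }
  assert (EA0 : A0 = fsum P N).
  { unfold A0, Aser. apply fsum_ext. intros j _. rewrite Rmult_0_r, Ropp_0, ee_0. unfold P. ring. }
  assert (E2 : Cmod (A1 + Cconj A2)%C <= 2 * (Re A0 - INR N * beta)).
  { rewrite E1, EA0, fsum_re. eapply Rle_trans. apply fsum_norm.
    assert (Hpos : forall j, 0 <= Re (P j) - beta).
    { intros j. unfold P. left. apply Rlt_0_minus. apply Hre. rewrite Cmod_zj; lra. }
    rewrite (rsum_ext _ (fun j => 2 * (Re (P j) - beta))).
    rewrite rsum_lin. lra.
    intros j. rewrite Cmod_mult. unfold w. rewrite Cmod_ee, Cmod_R, Rabs_pos_eq by (specialize (Hpos j); lra). ring. }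
  assert (E3 : Re A0 <= INR N + T).
  { pose proof (re_le_Cmod (A0 - RtoC (INR N))%C) as Hx.
    assert (Er : Re (A0 - RtoC (INR N))%C = Re A0 - INR N) by (unfold Cminus; rewrite re_plus, re_opp, re_RtoC; ring).
    rewrite Er in Hx. pose proof (Rle_abs (Re A0 - INR N)). lra. }
  assert (E4 : INR N * (Cmod (p k) * r ^ k) <= 2 * INR N * (1 - beta) + 4 * T).
  { replace (INR N * (Cmod (p k) * r ^ k)) with (Cmod (RtoC (INR N) * (p k * RtoC (r ^ k)))%C)
      by (rewrite !Cmod_mult, Cmod_INR, Cmod_R, Rabs_pos_eq by (apply pow_le; lra); ring).
    replace (RtoC (INR N) * (p k * RtoC (r ^ k)))%C with ((A1 + Cconj A2) - Cconj A2 - (A1 - RtoC (INR N) * (p k * RtoC (r ^ k))))%C by ring.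
    eapply Rle_trans. unfold Cminus at 1. apply Cmod_triangle. rewrite Cmod_opp.
    eapply Rle_trans. apply Rplus_le_compat_r. unfold Cminus. apply Cmod_triangle.
    rewrite Cmod_opp, Cmod_conj. lra. }
  unfold T in E4.
  apply Rmult_le_reg_l with (INR N). exact HN0.
  replace (INR N * (2 * (1 - beta) + 4 * (M * (q ^ (N - k) / (1 - q))))) with (2 * INR N * (1 - beta) + 4 * (INR N * M * (q ^ (N - k) / (1 - q)))) by ring.
  exact E4.
Qed.
Lemma bern_minus x k : 0 <= x <= 1 -> 1 - INR k * x <= (1 - x) ^ k.
Proof.
  intros Hx. induction k. simpl. lra.
  rewrite S_INR. simpl pow. assert (0 <= INR k) by apply pos_INR. nra.
Qed.

Lemma carath k : (1 <= k)%nat -> Cmod (p k) <= 2 * (1 - beta).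
Proof.
  intros Hk.
  assert (Step1 : forall r, 0 <= r < 1 -> Cmod (p k) * r ^ k <= 2 * (1 - beta)).
  { intros r Hr. destruct (good_at p r Gp Hr) as (M & r1 & H1 & H2 & HM0 & HM).
    set (q := r / r1).
    assert (Hq : 0 <= q < 1).
    { unfold q. split. apply Rmult_le_pos; [lra| left; apply Rinv_0_lt_compat; lra].
      apply Rmult_lt_reg_r with r1; [lra|]. unfold Rdiv. rewrite Rmult_assoc, Rinv_l by lra. lra. }
    assert (Hb : forall l, Cmod (p l) * r ^ l <= M * q ^ l).
    { intros l. unfold q, Rdiv. rewrite Rpow_mult_distr, pow_inv.
      assert (0 < r1 ^ l) by (apply pow_lt; lra).
      replace (Cmod (p l) * r ^ l) with ((Cmod (p l) * r1 ^ l) * (r ^ l * / r1 ^ l)) by (field; lra).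
      apply Rmult_le_compat_r. apply Rmult_le_pos. apply pow_le; lra. left; apply Rinv_0_lt_compat; lra. apply HM. }
    destruct (Rle_or_lt (Cmod (p k) * r ^ k) (2 * (1 - beta))) as [OK|Bad]. exact OK. exfalso.
    set (eps := Cmod (p k) * r ^ k - 2 * (1 - beta)).
    assert (Heps : 0 < eps) by (unfold eps; lra).
    destruct (pow_lt_1_zero q ltac:(rewrite Rabs_pos_eq; lra) (eps * (1 - q) / (4 * M + 1))) as [N0 HN0].
    { apply Rdiv_lt_0_compat. apply Rmult_lt_0_compat; lra. lra. }
    pose proof (carath_step r M q k (N0 + k + 1) Hr Hq HM0 Hb Hk ltac:(lia)) as HS.
    specialize (HN0 (N0 + k + 1 - k)%nat ltac:(lia)).
    rewrite Rabs_pos_eq in HN0 by (apply pow_le; lra).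
    set (Q := q ^ (N0 + k + 1 - k)) in *.
    assert (0 <= Q) by (unfold Q; apply pow_le; lra).
    assert (4 * (M * (Q / (1 - q))) < eps).
    { replace (4 * (M * (Q / (1 - q)))) with (4 * M * Q / (1 - q)) by (field; lra).
      apply Rmult_lt_reg_r with (1 - q). lra. unfold Rdiv. rewrite Rmult_assoc, Rinv_l, Rmult_1_r by lra.
      apply Rle_lt_trans with (4 * M * (eps * (1 - q) / (4 * M + 1))).
      apply Rmult_le_compat_l. lra. lra.
      replace (4 * M * (eps * (1 - q) / (4 * M + 1))) with ((4 * M / (4 * M + 1)) * (eps * (1 - q))) by (field; lra).
      rewrite <- (Rmult_1_l (eps * (1 - q))) at 2. apply Rmult_lt_compat_r. apply Rmult_lt_0_compat; lra.
      apply Rmult_lt_reg_r with (4 * M + 1). lra. unfold Rdiv. rewrite Rmult_assoc, Rinv_l by lra. lra. }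
    unfold eps in *. lra. }
  destruct (Rle_or_lt (Cmod (p k)) (2 * (1 - beta))) as [OK|Bad]. exact OK. exfalso.
  set (Cp := Cmod (p k)) in *. set (B := 2 * (1 - beta)) in *.
  assert (HB : 0 <= B).
  { unfold B. pose proof (Hre (RtoC 0) ltac:(rewrite Cmod_0; lra)) as H0.
    rewrite (csum_eq p (RtoC 0) (p 0%nat)) in H0 by apply (is_pseries_0 (V := C_NormedModule)).
    rewrite p0, re_RtoC in H0. lra. }
  assert (HkR : 1 <= INR k) by (apply (le_INR 1); lia).
  set (x := (Cp - B) / (2 * Cp * INR k)).
  assert (Hx0 : 0 < x) by (unfold x; apply Rdiv_lt_0_compat; [lra| apply Rmult_lt_0_compat; lra]).
  assert (Hxk : INR k * x = (Cp - B) / (2 * Cp)) by (unfold x; field; lra).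
  assert (Hx1 : x <= 1 / 2).
  { assert (INR k * x <= 1 / 2).
    { rewrite Hxk. apply Rmult_le_reg_r with (2 * Cp). lra. unfold Rdiv. rewrite Rmult_assoc, Rinv_l by lra. lra. }
    nra. }
  specialize (Step1 (1 - x) ltac:(lra)).
  pose proof (bern_minus x k ltac:(lra)) as HBe.
  assert (Cp * (1 - INR k * x) <= Cp * (1 - x) ^ k) by (apply Rmult_le_compat_l; lra).
  rewrite Hxk in H.
  replace (Cp * (1 - (Cp - B) / (2 * Cp))) with ((Cp + B) / 2) in H by (field; lra).
  lra.
Qed.

End Carath.

Lemma Good_le1 c d : Good c -> (forall n, Cmod (d n) <= Cmod (c n) + 1) -> Good d.
Proof.
  intros G H r Hr. destruct (G r Hr) as [M HM]. exists (M + 1). intros n.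
  assert (r ^ n <= 1) by (rewrite <- (pow1 n); apply pow_incr; lra).
  assert (0 <= r ^ n) by (apply pow_le; lra).
  specialize (H n). specialize (HM n). nra.
Qed.

Lemma Good_polyw c : Good c -> Good (fun n => RtoC (INR n) * c n)%C.
Proof.
  intros G r Hr. destruct (G ((1 + r) / 2)) as [M HM]. lra.
  set (r1 := (1 + r) / 2) in *.
  exists (r / (r1 - r) * M). intros n. rewrite Cmod_mult, Cmod_INR.
  pose proof (lin_geo r r1 n ltac:(unfold r1; lra)) as L.
  specialize (HM n). assert (0 <= Cmod (c n)) by apply Cmod_ge_0.
  assert (0 <= r / (r1 - r)) by (apply Rmult_le_pos; [lra| left; apply Rinv_0_lt_compat; unfold r1; lra]).
  replace (INR n * Cmod (c n) * r ^ n) with (Cmod (c n) * (INR n * r ^ n)) by ring.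
  apply Rle_trans with (Cmod (c n) * (r / (r1 - r) * r1 ^ n)). apply Rmult_le_compat_l; auto.
  replace (Cmod (c n) * (r / (r1 - r) * r1 ^ n)) with (r / (r1 - r) * (Cmod (c n) * r1 ^ n)) by ring.
  apply Rmult_le_compat_l; auto.
Qed.

Lemma Good_polyd c d : Good c -> Good (fun n => RtoC (INR n ^ d) * c n)%C.
Proof.
  intros G. induction d.
  - eapply Good_le. exact G. intros n. simpl. rewrite Cmod_mult, Cmod_R, Rabs_R1. lra.
  - eapply Good_le. apply (Good_polyw _ IHd). intros n. simpl. rewrite RtoC_mult. right. f_equal. ring.
Qed.

Lemma binom_le d k : INR (fact (d + k)) <= INR (k + 1) ^ d * INR (fact k) * INR (fact d).
Proof.
  induction d.
  - simpl. lra.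
  - replace (S d + k)%nat with (S (d + k)) by lia.
    rewrite !fact_simpl. rewrite !mult_INR.
    assert (0 <= INR (fact k)) by apply pos_INR.
    assert (0 <= INR (fact d)) by apply pos_INR.
    assert (0 <= INR (k + 1) ^ d) by (apply pow_le, pos_INR).
    assert (HS : INR (S (d + k)) <= INR (k + 1) * INR (S d)) by (rewrite <- mult_INR; apply le_INR; nia).
    assert (0 <= INR (S (d + k))) by apply pos_INR.
    simpl pow.
    apply Rle_trans with (INR (S (d + k)) * (INR (k + 1) ^ d * INR (fact k) * INR (fact d))).
    apply Rmult_le_compat_l; auto.
    apply Rle_trans with ((INR (k + 1) * INR (S d)) * (INR (k + 1) ^ d * INR (fact k) * INR (fact d))).
    apply Rmult_le_compat_r; auto. apply Rmult_le_pos; [apply Rmult_le_pos|]; auto.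
    right. ring.
Qed.

Lemma Good_rus m delta c : (1 <= m)%nat -> Good c -> Good (rus_coef m delta c).
Proof.
  intros Hm G. apply Good_le1 with (c := (fun n => RtoC (INR n ^ delta) * c n)%C).
  apply Good_polyd; auto.
  intros n. destruct n as [|j].
  { unfold rus_coef. rewrite Cmod_0. match goal with |- _ <= ?x + 1 => assert (0 <= x) by apply Cmod_ge_0 end. lra. }
  unfold rus_coef. destruct (Nat.eqb j 0).
  { rewrite Cmod_1. match goal with |- _ <= ?x + 1 => assert (0 <= x) by apply Cmod_ge_0 end. lra. }
  destruct (Nat.eqb (j mod m) 0).
  2:{ rewrite Cmod_0. match goal with |- _ <= ?x + 1 => assert (0 <= x) by apply Cmod_ge_0 end. lra. }
  rewrite !Cmod_mult. set (k := (j / m)%nat).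
  assert (Hk : (k + 1 <= S j)%nat). { unfold k. assert (j / m <= j)%nat by (apply Nat.Div0.div_le_upper_bound; nia). lia. }
  assert (Hf : 0 < INR (fact k) * INR (fact delta)) by (apply Rmult_lt_0_compat; apply lt_0_INR, lt_O_fact).
  assert (Hr : 0 <= INR (fact (delta + k)) / (INR (fact k) * INR (fact delta))) by (apply Rmult_le_pos; [apply pos_INR| left; apply Rinv_0_lt_compat; auto]).
  rewrite Cmod_R, Rabs_pos_eq by auto. rewrite Cmod_R, Rabs_pos_eq by (apply pow_le, pos_INR).
  assert (INR (fact (delta + k)) / (INR (fact k) * INR (fact delta)) <= INR (S j) ^ delta).
  { apply Rmult_le_reg_r with (INR (fact k) * INR (fact delta)); auto. unfold Rdiv.
    rewrite Rmult_assoc, Rinv_l, Rmult_1_r by lra.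
    eapply Rle_trans. apply binom_le. rewrite Rmult_assoc. apply Rmult_le_compat_r. lra.
    apply pow_incr. split. apply pos_INR. apply le_INR; lia. }
  pose proof (Cmod_ge_0 (c (S j))). nra.
Qed.

Lemma coeffs_of_eq (h : C -> C) c : (forall z, in_U z -> is_pseries c z (h z)) -> coeffs_of h = c.
Proof.
  intros H.
  pose proof (epsilon_spec (inhabits (fun _ : nat => RtoC 0))
    (fun c' : nat -> C => forall z, in_U z -> is_pseries c' z (h z)) (ex_intro _ c H)) as H2.
  fold (coeffs_of h) in H2. cbv beta in H2.
  assert (G1 : Good c) by (apply good_of_conv; intros z Hz; exists (h z); apply H; exact Hz).
  assert (G2 : Good (coeffs_of h)) by (apply good_of_conv; intros z Hz; exists (h z); apply H2; exact Hz).
  apply functional_extensionality. apply coef_unique; auto.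
  intros z Hz. rewrite (csum_eq _ _ _ (H2 z Hz)), (csum_eq _ _ _ (H z Hz)). reflexivity.
Qed.

Definition sh (c : nat -> C) (n : nat) : C := c (S n).
Definition shR (c : nat -> C) (n : nat) : C := match n with O => RtoC 0 | S k => c k end.

Lemma Good_sh c : Good c -> Good (sh c).
Proof.
  intros G. apply Good_le with (Dc c). apply Good_D; auto.
  intros n. unfold sh, Dc. rewrite Cmod_mult, Cmod_INR. rewrite S_INR.
  pose proof (pos_INR n). pose proof (Cmod_ge_0 (c (S n))). nra.
Qed.

Lemma Good_shR c : Good c -> Good (shR c).
Proof.
  intros G r Hr. destruct (G r Hr) as [M HM]. exists (Rmax M 0). intros n. destruct n.
  simpl. rewrite Cmod_0. pose proof (Rmax_r M 0). lra.
  simpl. specialize (HM n). assert (0 <= Cmod (c n) * r ^ n) by (apply Rmult_le_pos; [apply Cmod_ge_0| apply pow_le; lra]).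
  pose proof (Rmax_l M 0). 
  replace (Cmod (c n) * (r * r ^ n)) with (r * (Cmod (c n) * r ^ n)) by ring. nra.
Qed.

Lemma csum_sh c z : Good c -> Cmod z < 1 -> csum c z = (c 0%nat + z * csum (sh c) z)%C.
Proof.
  intros G Hz. apply csum_eq. apply pseries_term.
  pose proof (good_conv (sh c) z (Good_sh c G) Hz) as H. apply pseries_term in H.
  apply is_series_decr_1.
  pose proof (is_series_scal_l z _ _ H) as H2.
  match goal with |- is_series _ ?v => replace v with (scal z (csum (sh c) z)) end.
  eapply is_series_ext; [|exact H2]. intros n. unfold scal; simpl. unfold mult; simpl. unfold term, sh. simpl. rewrite pow_n_Cpow. ring.
  unfold scal, plus, opp; simpl. unfold mult; simpl. unfold term. simpl. ring.
Qed.

Lemma csum_shR c z : Good c -> Cmod z < 1 -> csum (shR c) z = (z * csum c z)%C.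
Proof.
  intros G Hz. rewrite (csum_sh (shR c) z (Good_shR c G) Hz). simpl.
  replace (sh (shR c)) with c by (apply functional_extensionality; intros; reflexivity). ring.
Qed.

Lemma cderiv_eq F z l : is_derive F z l -> cderiv F z = l.
Proof.
  intros H. unfold cderiv.
  pose proof (epsilon_spec (inhabits (RtoC 0)) (fun l => @is_derive C_AbsRing C_NormedModule F z l) (ex_intro _ l H)) as H2.
  cbv beta in H2. rewrite <- (is_C_derive_unique _ _ _ H2). apply is_C_derive_unique. exact H.
Qed.

Lemma locally_U z : Cmod z < 1 -> @locally (AbsRing_UniformSpace C_AbsRing) z (fun w => Cmod w < 1).
Proof.
  intros Hz. assert (He : 0 < 1 - Cmod z) by lra. exists (mkposreal _ He). intros y Hy.
  change (Cmod (minus y z) < 1 - Cmod z) in Hy.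
  assert (Ey : y = (z + minus y z)%C) by (exact (cplus_minus_id y z)).
  rewrite Ey. eapply Rle_lt_trans. apply Cmod_triangle. lra.
Qed.

Lemma Rus_derivs c : Good c -> forall z, Cmod z < 1 ->
  cderiv (fun w => csum c w) z = csum (Dc c) z /\
  cderiv (cderiv (fun w => csum c w)) z = csum (Dc (Dc c)) z.
Proof.
  intros G z Hz. split.
  - apply cderiv_eq. apply (deriv_csum c z G Hz).
  - apply cderiv_eq.
    apply (is_derive_ext_loc (fun w => csum (Dc c) w)).
    + generalize (locally_U z Hz). apply filter_imp. intros w Hw. symmetry.
      apply cderiv_eq. apply (deriv_csum c w G Hw).
    + apply (deriv_csum (Dc c) z (Good_D c G) Hz).
Qed.

Definition d0 (n : nat) : C := if (n =? 0)%nat then RtoC 1 else RtoC 0.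

Lemma Good_d0 : Good d0.
Proof.
  apply Good_le1 with (c := fun _ => RtoC 0).
  intros r Hr. exists 0. intros n. rewrite Cmod_0. lra.
  intros n. unfold d0. rewrite Cmod_0. destruct (n =? 0)%nat. rewrite Cmod_1. lra. rewrite Cmod_0. lra.
Qed.

Lemma csum_d0 z : csum d0 z = RtoC 1.
Proof.
  apply csum_eq. apply pseries_term. eapply is_series_ext; [|apply (single_series (RtoC 1) 0)].
  intros n. unfold term, d0. destruct n; simpl; ring.
Qed.

Definition k1 lam gam : C := RtoC ((1 - lam) * (1 - gam)).
Definition k2 lam gam : C := RtoC (lam * (gam + 1) + gam).
Definition k3 lam gam : C := RtoC (lam * gam).

Definition jB m delta lam gam c n : C :=
  (k1 lam gam * sh (rus_coef m delta c) n + k2 lam gam * Dc (rus_coef m delta c) n)%C.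
Definition jA m delta lam gam c n : C :=
  (1 * jB m delta lam gam c n + k3 lam gam * shR (Dc (Dc (rus_coef m delta c))) n)%C.
Definition jI m delta lam gam c n : C :=
  (1 * jA m delta lam gam c n + (- (RtoC 2 * k3 lam gam + 1)) * d0 n)%C.
Definition jc m delta tau lam gam c n : C :=
  (1 * d0 n + / tau * jI m delta lam gam c n)%C.

Lemma Good_jc m delta tau lam gam c : (1 <= m)%nat -> Good c -> Good (jc m delta tau lam gam c).
Proof.
  intros Hm G. pose proof (Good_rus m delta c Hm G) as Gr.
  unfold jc. apply Good_comb. apply Good_d0.
  unfold jI. apply Good_comb; [|apply Good_d0].
  unfold jA. apply Good_comb. unfold jB. apply Good_comb. apply Good_sh; auto. apply Good_D; auto.
  apply Good_shR. apply Good_D, Good_D; auto.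
Qed.

Lemma J_expand m delta tau lam gam (h : C -> C) c : (1 <= m)%nat ->
  (forall z, in_U z -> is_pseries c z (h z)) ->
  forall z, in_U z -> J m delta tau lam gam h z = csum (jc m delta tau lam gam c) z.
Proof.
  intros Hm Hh z Hz. unfold in_U in Hz.
  assert (G : Good c) by (apply good_of_conv; intros w Hw; exists (h w); apply Hh; exact Hw).
  pose proof (Good_rus m delta c Hm G) as Gr.
  set (rc := rus_coef m delta c) in *.
  assert (ER : Rus m delta h = fun w => csum rc w).
  { unfold Rus. rewrite (coeffs_of_eq h c Hh). reflexivity. }
  destruct (Rus_derivs rc Gr z Hz) as [D1 D2].
  assert (RD : Rus_div_z m delta h z = csum (sh rc) z).
  { unfold Rus_div_z. destruct (excluded_middle_informative (z = RtoC 0)) as [E|E].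
    - subst z. symmetry. apply csum_eq. apply (is_pseries_0 (V := C_NormedModule) (sh rc)).
    - rewrite ER. rewrite (csum_sh rc z Gr Hz).
      replace (rc 0%nat) with (RtoC 0) by reflexivity. field. exact E. }
  unfold J. cbv zeta. rewrite RD, ER, D1, D2.
  assert (GB : Good (sh rc)) by (apply Good_sh; auto).
  assert (GD : Good (Dc rc)) by (apply Good_D; auto).
  assert (GDD : Good (Dc (Dc rc))) by (apply Good_D; auto).
  assert (GS : Good (shR (Dc (Dc rc)))) by (apply Good_shR; auto).
  assert (GjB : Good (jB m delta lam gam c)) by (unfold jB; apply Good_comb; auto).
  assert (GjA : Good (jA m delta lam gam c)) by (unfold jA; apply Good_comb; auto).
  assert (GjI : Good (jI m delta lam gam c)) by (unfold jI; apply Good_comb; auto using Good_d0).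
  unfold jc. rewrite (csum_comb _ _ _ _ z Good_d0 GjI Hz).
  unfold jI. rewrite (csum_comb _ _ _ _ z GjA Good_d0 Hz).
  unfold jA. rewrite (csum_comb _ _ _ _ z GjB GS Hz).
  unfold jB. rewrite (csum_comb _ _ _ _ z GB GD Hz).
  rewrite (csum_shR _ z GDD Hz).
  rewrite csum_d0. unfold k1, k2, k3. ring.
Qed.

Definition wt (lam gam : R) (n : nat) : R :=
  (1 - lam) * (1 - gam) + (lam * (gam + 1) + gam) * INR (S n) + lam * gam * (INR n * INR (S n)).

Lemma jc_S m delta tau lam gam c n :
  jc m delta tau lam gam c (S n) = (/ tau * RtoC (wt lam gam (S n)) * rus_coef m delta c (S (S n)))%C.
Proof.
  unfold jc, jI, jA, jB, d0, sh, shR, Dc. simpl Nat.eqb. cbv iota.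
  set (X := rus_coef m delta c (S (S n))).
  match goal with |- (_ * _ + / tau * ?I)%C = _ => replace I with (RtoC (wt lam gam (S n)) * X)%C end.
  ring.
  unfold wt, k1, k2, k3. destruct X as [x y].
  unfold RtoC, Cplus, Cmult, Copp; simpl. f_equal; ring.
Qed.

Lemma jc_0 m delta tau lam gam c : jc m delta tau lam gam c 0%nat = RtoC 1.
Proof.
  unfold jc, jI, jA, jB, d0, sh, shR, Dc. simpl Nat.eqb. cbv iota.
  replace (rus_coef m delta c 1) with (RtoC 1) by reflexivity.
  replace (k1 lam gam * RtoC 1 + k2 lam gam * (RtoC (INR 1) * RtoC 1))%C with (RtoC 1 + RtoC 2 * k3 lam gam)%C.
  ring.
  unfold k1, k2, k3. simpl INR. rewrite <- !RtoC_mult, <- !RtoC_plus. f_equal. ring.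
Qed.

Lemma rus_m m delta c : (1 <= m)%nat -> rus_coef m delta c (S m) = (RtoC (INR delta + 1) * c (S m))%C.
Proof.
  intros Hm. unfold rus_coef.
  destruct (Nat.eqb_spec m 0). lia.
  rewrite Nat.Div0.mod_same. simpl Nat.eqb. cbv iota. rewrite Nat.div_same by lia.
  f_equal. f_equal. rewrite Nat.add_1_r, fact_simpl, mult_INR, S_INR.
  replace (INR (fact 1)) with 1 by (simpl; ring). field. apply INR_fact_neq_0.
Qed.

Lemma rus_2m m delta c : (1 <= m)%nat ->
  rus_coef m delta c (S (2 * m)) = (RtoC ((INR delta + 1) * (INR delta + 2) / 2) * c (S (2 * m)))%C.
Proof.
  intros Hm. unfold rus_coef.
  destruct (Nat.eqb_spec (2 * m) 0). lia.
  rewrite Nat.Div0.mod_mul. simpl Nat.eqb. cbv iota. rewrite Nat.div_mul by lia.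
  f_equal. f_equal. replace (delta + 2)%nat with (S (S delta)) by lia. rewrite !fact_simpl, !mult_INR.
  rewrite !S_INR. replace (INR (fact 2)) with 2 by (simpl; ring). simpl INR. simpl fact. replace (INR 1) with 1 by reflexivity. field. apply INR_fact_neq_0.
Qed.

Definition ek (k i : nat) : C := if (i =? k)%nat then RtoC 1 else RtoC 0.

Lemma fsum_term_ek k z N : (k < N)%nat -> fsum (term (ek k) z) N = Cpow z k.
Proof.
  intros H.
  assert (Z : forall n, (n <= k)%nat -> fsum (term (ek k) z) n = RtoC 0).
  { induction n; intros Hn. reflexivity.
    change (fsum (term (ek k) z) (S n)) with (fsum (term (ek k) z) n + term (ek k) z n)%C.
    rewrite IHn by lia. unfold term, ek. destruct (Nat.eqb_spec n k). lia. ring. }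
  induction H.
  - change (fsum (term (ek k) z) (S k)) with (fsum (term (ek k) z) k + term (ek k) z k)%C.
    rewrite Z by lia. unfold term, ek. rewrite Nat.eqb_refl. ring.
  - change (fsum (term (ek k) z) (S m)) with (fsum (term (ek k) z) m + term (ek k) z m)%C.
    rewrite IHle. unfold term, ek. destruct (Nat.eqb_spec m k). lia. ring.
Qed.

Lemma fsum_term_comb (a b : C) p q z N :
  fsum (term (fun i => a * p i + b * q i)%C z) N = (a * fsum (term p z) N + b * fsum (term q z) N)%C.
Proof. induction N; simpl. ring. rewrite IHN. unfold term. ring. Qed.

Lemma fsum_term_ext p q z N : (forall i, (i < N)%nat -> p i = q i) -> fsum (term p z) N = fsum (term q z) N.
Proof. intros H. apply fsum_ext. intros i Hi. unfold term. rewrite H by auto. reflexivity. Qed.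

Lemma Cmod_le_pow z a b : Cmod z <= 1 -> (a <= b)%nat -> Cmod z ^ b <= Cmod z ^ a.
Proof. intros. apply pow_le_mono_dec; auto. split; [apply Cmod_ge_0|auto]. Qed.

Section Inverse.
Variable m : nat.
Variables a b : nat -> C.
Variables f g : C -> C.
Hypothesis Hm : (1 <= m)%nat.
Hypothesis Ha : mfold_coeffs m a.
Hypothesis Ga : Good a.
Hypothesis Gb : Good b.
Hypothesis Hf : forall z, Cmod z < 1 -> f z = csum a z.
Hypothesis Hg : forall w, Cmod w < 1 -> g w = csum b w.
Hypothesis Hinv : forall z, Cmod z < 1 -> Cmod (f z) < 1 -> g (f z) = z.

Let A := a (S m).
Let A2 := a (S (2 * m)).

Lemma a_expand : forall i, (i < S (S (2 * m)))%nat ->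
  a i = (1 * (1 * ek 1 i + A * ek (S m) i) + A2 * ek (S (2 * m)) i)%C.
Proof.
  intros i Hi. destruct Ha as [Ha1 Ha2]. unfold ek.
  destruct (Nat.eqb_spec i 1) as [E1|E1]; destruct (Nat.eqb_spec i (S m)) as [E2|E2];
  destruct (Nat.eqb_spec i (S (2 * m))) as [E3|E3]; try lia.
  - subst. rewrite Ha1. ring.
  - subst. unfold A. ring.
  - subst. unfold A2. ring.
  - rewrite Ha2. ring. intros k Hk. subst i.
    destruct k as [|[|[|k]]]; [lia|lia|lia|nia].
Qed.

Lemma fsum_a z : fsum (term a z) (S (S (2 * m))) = (z + A * Cpow z (S m) + A2 * Cpow z (S (2 * m)))%C.
Proof.
  rewrite (fsum_term_ext _ _ z _ a_expand).
  rewrite !fsum_term_comb, !fsum_term_ek by lia. simpl Cpow at 1. ring.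
Qed.


Lemma Cpow_add z p q : Cpow z (p + q) = (Cpow z p * Cpow z q)%C.
Proof. induction p; simpl. ring. rewrite IHp. ring. Qed.

Lemma inv_coeffs : b (S m) = (- A)%C /\ b (S (2 * m)) = (RtoC (INR (S m)) * A * A - A2)%C.
Proof.
  destruct (tail_bound a (S (S (2 * m))) (1/2) Ga ltac:(lra)) as [Ka HKa].
  destruct (taylor2 b (1/2) Gb ltac:(lra)) as (K2 & HK20 & HK2).
  destruct (tail_bound (Dc b) 0 (1/2) (Good_D b Gb) ltac:(lra)) as [Cg0 HCg0].
  set (Cg := Rabs Cg0).
  assert (HCg : forall z, Cmod z <= 1/2 -> Cmod (csum (Dc b) z) <= Cg).
  { intros z Hz. specialize (HCg0 z Hz). simpl in HCg0. unfold Cg.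
    replace (csum (Dc b) z - RtoC 0)%C with (csum (Dc b) z) in HCg0 by ring.
    pose proof (Rle_abs Cg0). lra. }
  set (Ku := Rabs Ka + Cmod A + Cmod A2).
  assert (HKu0 : 0 <= Ku) by (unfold Ku; pose proof (Rabs_pos Ka); pose proof (Cmod_ge_0 A); pose proof (Cmod_ge_0 A2); lra).
  assert (Ef : forall z, Cmod z <= 1/2 ->
     Cmod (f z - (z + A * Cpow z (S m) + A2 * Cpow z (S (2 * m))))%C <= Rabs Ka * Cmod z ^ (S (S (2 * m)))).
  { intros z Hz. rewrite Hf by lra. rewrite <- fsum_a. eapply Rle_trans. apply HKa; auto.
    apply Rmult_le_compat_r. apply pow_le, Cmod_ge_0. apply Rle_abs. }
  assert (Eu : forall z, Cmod z <= 1/2 -> Cmod (f z - z)%C <= Ku * Cmod z ^ (S m)).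
  { intros z Hz. assert (Hz1 : Cmod z <= 1) by lra.
    replace (f z - z)%C with ((f z - (z + A * Cpow z (S m) + A2 * Cpow z (S (2 * m)))) + A * Cpow z (S m) + A2 * Cpow z (S (2 * m)))%C by ring.
    eapply Rle_trans. apply Cmod_triangle. eapply Rle_trans. apply Rplus_le_compat_r. apply Cmod_triangle.
    rewrite !Cmod_mult, !Cmod_pow. specialize (Ef z Hz).
    pose proof (Cmod_le_pow z (S m) (S (S (2 * m))) Hz1 ltac:(lia)).
    pose proof (Cmod_le_pow z (S m) (S (2 * m)) Hz1 ltac:(lia)).
    pose proof (Rabs_pos Ka). pose proof (Cmod_ge_0 A). pose proof (Cmod_ge_0 A2).
    unfold Ku. 
    assert (Rabs Ka * Cmod z ^ S (S (2 * m)) <= Rabs Ka * Cmod z ^ S m) by (apply Rmult_le_compat_l; auto).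
    assert (Cmod A2 * Cmod z ^ S (2 * m) <= Cmod A2 * Cmod z ^ S m) by (apply Rmult_le_compat_l; auto).
    nra. }
  set (d := 1 / (2 * (1 + Ku))).
  assert (Hd : 0 < d /\ d <= 1/2) by (unfold d; split; [apply Rdiv_lt_0_compat; lra| apply Rmult_le_reg_r with (2 * (1 + Ku)); [lra| unfold Rdiv; rewrite Rmult_assoc, Rinv_l by lra; lra]]).
  assert (Hfz : forall z, Cmod z <= d -> Cmod (f z) <= 1/2).
  { intros z Hz. specialize (Eu z ltac:(lra)).
    replace (f z) with (z + (f z - z))%C by ring. eapply Rle_trans. apply Cmod_triangle.
    pose proof (Cmod_le_pow z 1 (S m) ltac:(lra) ltac:(lia)) as Hp1. rewrite pow_1 in Hp1.
    assert (Ku * Cmod z ^ S m <= Ku * d) by (apply Rmult_le_compat_l; lra).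
    assert (d + Ku * d = 1/2) by (unfold d; field; lra). lra. }
  assert (ER : forall z, Cmod z <= d ->
     Cmod (z - csum b z - (f z - z) * csum (Dc b) z)%C <= K2 * Cmod (f z - z)%C ^ 2).
  { intros z Hz. pose proof (HK2 z (f z - z)%C ltac:(lra)) as H.
    replace (z + (f z - z))%C with (f z) in H by ring. specialize (H (Hfz z Hz)).
    assert (Ez : csum b (f z) = z).
    { rewrite <- (Hg (f z)) by (pose proof (Hfz z Hz); lra). apply Hinv. lra. pose proof (Hfz z Hz); lra. }
    rewrite Ez in H. exact H. }
  assert (Eu2 : forall z, Cmod z <= d -> Cmod (f z - z)%C ^ 2 <= Ku ^ 2 * Cmod z ^ (2 * S m)).
  { intros z Hz. replace (2 * S m)%nat with (S m * 2)%nat by lia. rewrite pow_mult. rewrite <- Rpow_mult_distr. apply pow_incr. split. apply Cmod_ge_0.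
    apply Eu; lra. }
  assert (S1 : forall i, (i < S m)%nat -> b i = ek 1 i).
  { destruct (tail_bound b (S m) (1/2) Gb ltac:(lra)) as [Kb HKb].
    set (p1 := fun i => (1 * b i + (-1) * ek 1 i)%C).
    assert (HP : forall i, (i < S m)%nat -> p1 i = RtoC 0).
    { apply (coef_extract p1 (S m) (Rabs Kb + K2 * Ku ^ 2 + Ku * Cg) d); [lra|].
      intros z Hz. assert (Hz1 : Cmod z <= 1) by lra.
      unfold p1. rewrite fsum_term_comb, fsum_term_ek by lia.
      replace (1 * fsum (term b z) (S m) + -1 * Cpow z 1)%C with
        (- (csum b z - fsum (term b z) (S m)) - (z - csum b z - (f z - z) * csum (Dc b) z) - (f z - z) * csum (Dc b) z)%C
        by (simpl; ring).
      eapply Rle_trans. apply Cmod_triangle. rewrite Cmod_opp.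
      eapply Rle_trans. apply Rplus_le_compat_r. apply Cmod_triangle.
      rewrite !Cmod_opp, Cmod_mult.
      specialize (HKb z ltac:(lra)). specialize (ER z Hz). specialize (Eu2 z Hz). specialize (Eu z ltac:(lra)).
      specialize (HCg z ltac:(lra)).
      assert (Cmod z ^ (2 * S m) <= Cmod z ^ S m) by (apply Cmod_le_pow; [lra|lia]).
      assert (0 <= Cmod z ^ S m) by (apply pow_le, Cmod_ge_0).
      assert (0 <= Cmod (f z - z)%C) by apply Cmod_ge_0.
      assert (0 <= Cg) by (unfold Cg; apply Rabs_pos).
      assert (Kb * Cmod z ^ S m <= Rabs Kb * Cmod z ^ S m) by (apply Rmult_le_compat_r; [auto| apply Rle_abs]).
      assert (K2 * Cmod (f z - z)%C ^ 2 <= K2 * (Ku ^ 2 * Cmod z ^ S m)).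
      { apply Rmult_le_compat_l; auto. eapply Rle_trans. exact Eu2. apply Rmult_le_compat_l. apply pow_le; lra. auto. }
      assert (Cmod (f z - z)%C * Cmod (csum (Dc b) z) <= Ku * Cmod z ^ S m * Cg).
      { apply Rmult_le_compat; auto. apply Cmod_ge_0. }
      nra. }
    intros i Hi. specialize (HP i Hi). unfold p1 in HP.
    replace (b i) with ((1 * b i + -1 * ek 1 i) + ek 1 i)%C by ring. rewrite HP. ring. }
  set (beta1 := (RtoC (INR (S m)) * b (S m))%C).
  assert (EDc : forall z, fsum (term (Dc b) z) (S m) = (1 + beta1 * Cpow z m)%C).
  { intros z. rewrite (fsum_term_ext (Dc b) (fun i => 1 * ek 0 i + beta1 * ek m i)%C z (S m)).
    rewrite fsum_term_comb, !fsum_term_ek by lia. simpl Cpow. ring.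
    intros i Hi. unfold Dc, ek. destruct (Nat.eqb_spec i 0) as [E0|E0]; destruct (Nat.eqb_spec i m) as [Em|Em]; try lia.
    - subst. rewrite S1 by lia. unfold ek. simpl. ring.
    - subst. unfold beta1. ring.
    - rewrite S1 by lia. unfold ek. destruct (Nat.eqb_spec (S i) 1). lia. ring. }
  destruct (tail_bound (Dc b) (S m) (1/2) (Good_D b Gb) ltac:(lra)) as [K1 HK1].
  destruct (tail_bound b (S (S (2 * m))) (1/2) Gb ltac:(lra)) as [Kb HKb].
  set (t := fun i => (1 * (1 * ek 1 i + (- A) * ek (S m) i) + (- (A2 + beta1 * A)) * ek (S (2 * m)) i)%C).
  set (p2 := fun i => (1 * b i + (-1) * t i)%C).
  set (KK := Rabs Kb + K2 * Ku ^ 2 + Cmod A2 * Cmod beta1 + (Cmod A + Cmod A2) * Rabs K1 + Rabs Ka * Cg).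
  assert (HP : forall i, (i < S (S (2 * m)))%nat -> p2 i = RtoC 0).
  { apply (coef_extract p2 (S (S (2 * m))) KK d); [lra|].
    intros z Hz. assert (Hz1 : Cmod z <= 1) by lra.
    unfold p2, t. rewrite !fsum_term_comb, !fsum_term_ek by lia.
    set (u := (f z - z)%C). set (g1 := csum (Dc b) z).
    set (P := (A * Cpow z (S m) + A2 * Cpow z (S (2 * m)))%C).
    set (Q := (1 + beta1 * Cpow z m)%C).
    set (EF := (f z - (z + A * Cpow z (S m) + A2 * Cpow z (S (2 * m))))%C).
    set (E1 := (g1 - fsum (term (Dc b) z) (S m))%C).
    assert (Hu : u = (P + EF)%C) by (unfold u, P, EF; ring).
    assert (Hg1 : g1 = (Q + E1)%C) by (unfold E1; rewrite EDc; unfold Q; ring).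
    assert (Hpow : (Cpow z (S m) * Cpow z m)%C = Cpow z (S (2 * m))).
    { rewrite <- Cpow_add. f_equal. lia. }
    assert (Hpow2 : (Cpow z (S (2 * m)) * Cpow z m)%C = Cpow z (S (3 * m))).
    { rewrite <- Cpow_add. f_equal. lia. }
    replace (1 * fsum (term b z) (S (S (2 * m))) +
      -1 * (1 * (1 * Cpow z 1 + - A * Cpow z (S m)) + - (A2 + beta1 * A) * Cpow z (S (2 * m))))%C with
      (- (csum b z - fsum (term b z) (S (S (2 * m)))) - (z - csum b z - u * g1)
        - (A2 * beta1 * Cpow z (S (3 * m)) + P * E1 + EF * g1))%C.
    2:{ rewrite <- Hpow2, Hg1, Hu. unfold P, Q.
        rewrite <- Hpow. replace (Cpow z 1) with z by (simpl; ring). ring. }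
    eapply Rle_trans. apply Cmod_triangle. rewrite Cmod_opp.
    eapply Rle_trans. apply Rplus_le_compat_r. apply Cmod_triangle.
    rewrite !Cmod_opp.
    eapply Rle_trans. apply Rplus_le_compat_l. eapply Rle_trans. apply Cmod_triangle. apply Rplus_le_compat_r. apply Cmod_triangle.
    rewrite !Cmod_mult, !Cmod_pow.
    specialize (HKb z ltac:(lra)). specialize (ER z Hz). specialize (Eu2 z Hz).
    pose proof (Ef z ltac:(lra)) as HEF. pose proof (HCg z ltac:(lra)) as HG1.
    specialize (HK1 z ltac:(lra)).
    set (r := Cmod z) in *. set (N2 := S (S (2 * m))) in *.
    assert (Hr0 : 0 <= r) by apply Cmod_ge_0.
    assert (HrN : 0 <= r ^ N2) by (apply pow_le; auto).
    assert (T1 : Cmod (csum b z - fsum (term b z) N2)%C <= Rabs Kb * r ^ N2).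
    { eapply Rle_trans. exact HKb. apply Rmult_le_compat_r; auto. apply Rle_abs. }
    assert (T2 : Cmod (z - csum b z - u * g1)%C <= K2 * Ku ^ 2 * r ^ N2).
    { eapply Rle_trans. exact ER.
      replace (2 * S m)%nat with N2 in Eu2 by (unfold N2; lia). rewrite Rmult_assoc. apply Rmult_le_compat_l; auto. }
    assert (T3 : Cmod A2 * Cmod beta1 * r ^ S (3 * m) <= Cmod A2 * Cmod beta1 * r ^ N2).
    { apply Rmult_le_compat_l. apply Rmult_le_pos; apply Cmod_ge_0. apply Cmod_le_pow; auto. unfold N2; lia. }
    assert (T4 : Cmod P * Cmod E1 <= (Cmod A + Cmod A2) * Rabs K1 * r ^ N2).
    { assert (HP1 : Cmod P <= (Cmod A + Cmod A2) * r ^ S m).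
      { unfold P. eapply Rle_trans. apply Cmod_triangle. rewrite !Cmod_mult, !Cmod_pow. fold r.
        assert (r ^ S (2 * m) <= r ^ S m) by (apply Cmod_le_pow; auto; lia).
        pose proof (Cmod_ge_0 A2). pose proof (Cmod_ge_0 A). 
        assert (Cmod A2 * r ^ S (2 * m) <= Cmod A2 * r ^ S m) by (apply Rmult_le_compat_l; auto). lra. }
      assert (HE1 : Cmod E1 <= Rabs K1 * r ^ S m).
      { unfold E1, g1. eapply Rle_trans. exact HK1. apply Rmult_le_compat_r. apply pow_le; auto. apply Rle_abs. }
      eapply Rle_trans. apply Rmult_le_compat; try apply Cmod_ge_0. exact HP1. exact HE1.
      replace N2 with (S m + S m)%nat by (unfold N2; lia). rewrite pow_add. right; ring. }
    assert (T5 : Cmod EF * Cmod g1 <= Rabs Ka * Cg * r ^ N2).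
    { replace (Rabs Ka * Cg * r ^ N2) with ((Rabs Ka * r ^ N2) * Cg) by ring.
      apply Rmult_le_compat; try apply Cmod_ge_0; auto. }
    unfold KK. nra. }
  assert (Hb1 : b (S m) = (- A)%C).
  { specialize (HP (S m) ltac:(lia)). unfold p2, t, ek in HP.
    rewrite Nat.eqb_refl in HP. destruct (Nat.eqb_spec (S m) 1). lia. destruct (Nat.eqb_spec (S m) (S (2 * m))). lia.
    replace (b (S m)) with ((1 * b (S m) + -1 * (1 * (1 * RtoC 0 + - A * RtoC 1) + - (A2 + beta1 * A) * RtoC 0)) - A)%C by ring.
    rewrite HP. ring. }
  split. exact Hb1.
  specialize (HP (S (2 * m)) ltac:(lia)). unfold p2, t, ek in HP.
  rewrite Nat.eqb_refl in HP. destruct (Nat.eqb_spec (S (2 * m)) 1). lia. destruct (Nat.eqb_spec (S (2 * m)) (S m)). lia.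
  replace (b (S (2 * m))) with ((1 * b (S (2 * m)) + -1 * (1 * (1 * RtoC 0 + - A * RtoC 0) + - (A2 + beta1 * A) * RtoC 1)) - (A2 + beta1 * A))%C by ring.
  rewrite HP. unfold beta1. rewrite Hb1. ring.
Qed.

End Inverse.

Lemma jc_at m delta tau lam gam c n : (1 <= n)%nat ->
  jc m delta tau lam gam c n = (/ tau * RtoC (wt lam gam n) * rus_coef m delta c (S n))%C.
Proof. intros H. destruct n. lia. apply jc_S. Qed.

Lemma wt_m lam gam m : wt lam gam m = 1 + INR m * (lam + gam) + lam * gam * ((INR m + 1) ^ 2 + 1).
Proof. unfold wt. rewrite S_INR. ring. Qed.

Lemma wt_2m lam gam m : wt lam gam (2 * m) = Phi1 lam gam m.
Proof. unfold wt, Phi1. rewrite S_INR, mult_INR. simpl (INR 2). ring. Qed.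

Theorem theorem2 (lam gam beta : R) (tau : C) (delta m : nat)
    (f : C -> C) (a : nat -> C) :
  0 <= lam -> 0 <= gam <= 1 -> 0 <= beta < 1 -> tau <> RtoC 0 -> (1 <= m)%nat ->
  mfold_coeffs m a -> (forall z, in_U z -> is_pseries a z (f z)) ->
  in_Theta m tau lam gam delta beta f ->
  Cmod (a (m + 1)%nat) <=
    Rmin (2 * Cmod tau * (1 - beta) /
            ((INR delta + 1) *
             (1 + INR m * (lam + gam) + lam * gam * ((INR m + 1) ^ 2 + 1))))
         (2 * sqrt (2 * Cmod tau * (1 - beta) /
            ((INR delta + 1) * (INR delta + 2) * (INR m + 1) * Phi1 lam gam m)))
  /\
  Cmod (a (2 * m + 1)%nat) <=
    4 * Cmod tau * (1 - beta) /
      ((INR delta + 1) * (INR delta + 2) *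
       (1 + 2 * (lam + gam) * INR m + lam * gam * ((2 * INR m + 1) ^ 2 + 1))).
Proof.
  intros Hlam Hgam Hbeta Htau Hm Ha Hfa HT.
  destruct HT as (g & (HAm & Huni & (Hgan & Hguni & Hinv)) & HJf & HJg).
  destruct Hgan as [b Hgb].
  assert (Ga : Good a) by (apply good_of_conv; intros z Hz; exists (f z); apply Hfa; exact Hz).
  assert (Gb : Good b) by (apply good_of_conv; intros z Hz; exists (g z); apply Hgb; exact Hz).
  assert (Hf : forall z, Cmod z < 1 -> f z = csum a z) by (intros z Hz; symmetry; apply csum_eq, Hfa, Hz).
  assert (Hg : forall z, Cmod z < 1 -> g z = csum b z) by (intros z Hz; symmetry; apply csum_eq, Hgb, Hz).
  destruct (inv_coeffs m a b f g Hm Ha Ga Gb Hf Hg Hinv) as [Hb1 Hb2].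
  set (A := a (S m)) in *. set (A2 := a (S (2 * m))) in *.
  assert (Cf : forall k, (1 <= k)%nat -> Cmod (jc m delta tau lam gam a k) <= 2 * (1 - beta)).
  { apply carath. apply Good_jc; auto. apply jc_0.
    intros z Hz. rewrite <- (J_expand m delta tau lam gam f a Hm Hfa z Hz). apply HJf. exact Hz. }
  assert (Cg : forall k, (1 <= k)%nat -> Cmod (jc m delta tau lam gam b k) <= 2 * (1 - beta)).
  { apply carath. apply Good_jc; auto. apply jc_0.
    intros z Hz. rewrite <- (J_expand m delta tau lam gam g b Hm Hgb z Hz). apply HJg. exact Hz. }
  assert (Htau0 : 0 < Cmod tau) by (apply Cmod_gt_0; exact Htau).
  assert (Hd1 : 0 < INR delta + 1) by (pose proof (pos_INR delta); lra).
  assert (Hd2 : 0 < INR delta + 2) by (pose proof (pos_INR delta); lra).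
  assert (HmR : 1 <= INR m) by (apply (le_INR 1); lia).
  set (L1 := 1 + INR m * (lam + gam) + lam * gam * ((INR m + 1) ^ 2 + 1)).
  assert (HL1 : 1 <= L1) by (unfold L1; assert (0 <= lam * gam) by nra; assert (0 <= (INR m + 1) ^ 2 + 1) by nra; nra).
  assert (HP1 : 1 <= Phi1 lam gam m) by (unfold Phi1; assert (0 <= lam * gam) by nra; assert (0 <= (2 * INR m + 1) ^ 2 + 1) by nra; nra).
  assert (Bm : / Cmod tau * L1 * (INR delta + 1) * Cmod A <= 2 * (1 - beta)).
  { specialize (Cf m Hm). rewrite jc_at, rus_m in Cf by auto.
    rewrite !Cmod_mult, Cmod_inv, !Cmod_R, wt_m in Cf by auto. fold L1 in Cf.
    rewrite (Rabs_pos_eq L1), (Rabs_pos_eq (INR delta + 1)) in Cf by lra. fold A in Cf. lra. }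
  set (D2 := (INR delta + 1) * (INR delta + 2) / 2).
  assert (HD2 : 0 < D2) by (unfold D2; nra).
  assert (B2 : / Cmod tau * Phi1 lam gam m * D2 * Cmod A2 <= 2 * (1 - beta)).
  { specialize (Cf (2 * m)%nat ltac:(lia)). rewrite jc_at, rus_2m in Cf by lia.
    rewrite !Cmod_mult, Cmod_inv, !Cmod_R, wt_2m in Cf by auto. fold D2 A2 in Cf.
    rewrite (Rabs_pos_eq (Phi1 lam gam m)), (Rabs_pos_eq D2) in Cf by lra. lra. }
  assert (BS : / Cmod tau * Phi1 lam gam m * D2 * (INR (S m) * Cmod A ^ 2) <= 4 * (1 - beta)).
  { pose proof (Cf (2 * m)%nat ltac:(lia)) as C1. pose proof (Cg (2 * m)%nat ltac:(lia)) as C2.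
    rewrite jc_at, rus_2m in C1, C2 by lia. rewrite Hb2 in C2. fold A2 in C1.
    assert (Hsum : Cmod ((/ tau * RtoC (wt lam gam (2 * m)) * (RtoC D2 * A2)) +
                        (/ tau * RtoC (wt lam gam (2 * m)) * (RtoC D2 * (RtoC (INR (S m)) * A * A - A2))))%C <= 4 * (1 - beta)).
    { eapply Rle_trans. apply Cmod_triangle. unfold D2. lra. }
    replace ((/ tau * RtoC (wt lam gam (2 * m)) * (RtoC D2 * A2)) +
             (/ tau * RtoC (wt lam gam (2 * m)) * (RtoC D2 * (RtoC (INR (S m)) * A * A - A2))))%C
      with (/ tau * RtoC (wt lam gam (2 * m)) * RtoC D2 * RtoC (INR (S m)) * (A * A))%C in Hsum by ring.
    rewrite !Cmod_mult, Cmod_inv, !Cmod_R, wt_2m in Hsum by auto.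
    rewrite (Rabs_pos_eq (Phi1 lam gam m)), (Rabs_pos_eq D2), (Rabs_pos_eq (INR (S m))) in Hsum by (try apply pos_INR; lra).
    replace (Cmod A ^ 2) with (Cmod A * Cmod A) by ring. lra. }
  replace (m + 1)%nat with (S m) by lia. replace (2 * m + 1)%nat with (S (2 * m)) by lia.
  fold A A2. fold L1.
  pose proof (Cmod_ge_0 A). pose proof (Cmod_ge_0 A2).
  assert (Hit : 0 < / Cmod tau) by (apply Rinv_0_lt_compat; lra).
  split.
  - apply Rmin_glb.
    + apply Rmult_le_reg_l with (/ Cmod tau * L1 * (INR delta + 1)).
      apply Rmult_lt_0_compat; [apply Rmult_lt_0_compat|]; lra.
      replace (/ Cmod tau * L1 * (INR delta + 1) * (2 * Cmod tau * (1 - beta) / ((INR delta + 1) * L1)))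
        with (2 * (1 - beta)) by (field; repeat split; lra). lra.
    + set (X := 2 * Cmod tau * (1 - beta) / ((INR delta + 1) * (INR delta + 2) * (INR m + 1) * Phi1 lam gam m)).
      assert (HX : Cmod A ^ 2 <= 4 * X).
      { unfold X. rewrite S_INR in BS.
        apply Rmult_le_reg_l with (/ Cmod tau * Phi1 lam gam m * D2 * (INR m + 1)).
        apply Rmult_lt_0_compat; [apply Rmult_lt_0_compat; [apply Rmult_lt_0_compat|]|]; lra.
        replace (/ Cmod tau * Phi1 lam gam m * D2 * (INR m + 1) *
          (4 * (2 * Cmod tau * (1 - beta) / ((INR delta + 1) * (INR delta + 2) * (INR m + 1) * Phi1 lam gam m))))
          with (4 * (1 - beta)) by (unfold D2; field; repeat split; lra). lra. }
      assert (HX0 : 0 <= X) by (unfold X; apply Rmult_le_pos; [nra| left; apply Rinv_0_lt_compat; apply Rmult_lt_0_compat; [|lra]; apply Rmult_lt_0_compat; [|lra]; nra]).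
      rewrite <- (sqrt_pow2 (Cmod A)) by auto.
      replace (2 * sqrt X) with (sqrt (4 * X)).
      apply sqrt_le_1_alt. lra.
      rewrite sqrt_mult by lra. replace 4 with (2 ^ 2) by ring. rewrite sqrt_pow2 by lra. reflexivity.
  - replace (1 + 2 * (lam + gam) * INR m + lam * gam * ((2 * INR m + 1) ^ 2 + 1)) with (Phi1 lam gam m) by (unfold Phi1; ring).
    apply Rmult_le_reg_l with (/ Cmod tau * Phi1 lam gam m * D2).
    apply Rmult_lt_0_compat; [apply Rmult_lt_0_compat|]; lra.
    replace (/ Cmod tau * Phi1 lam gam m * D2 * (4 * Cmod tau * (1 - beta) / ((INR delta + 1) * (INR delta + 2) * Phi1 lam gam m)))
      with (2 * (1 - beta)) by (unfold D2; field; repeat split; lra). lra.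
Qed.
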